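(* Let $d_2>0$, $y_\star>0$, $K_P\ge 0$, $K_I>0$ and $u_0\in\mathbb{R}$. Consider the system on $\mathbb{R}^3$ with state $\chi=(\chi_1,\chi_2,\chi_3)=(x_1,x_2,x_c)$ given by $$\dot x_1 = 1 - x_2 u,\qquad \dot x_2 = -d_2 x_2 + x_1 u,\qquad \dot x_c = y_\star - x_2,\qquad u = u_0 + K_I x_c + K_P (y_\star - x_2),$$ i.e. $$\dot\chi=\begin{pmatrix}1-u_0\chi_2-K_I\chi_2\chi_3-K_P\chi_2 y_\star+K_P\chi_2^2\\ -d_2\chi_2+u_0\chi_1+K_I\chi_1\chi_3+K_P\chi_1 y_\star-K_P\chi_1\chi_2\\ -\chi_2+y_\star\end{pmatrix}.$$ Then this closed-loop system has a unique equilibrium point, and this equilibrium is unstable (in the sense of Lyapunov) for all values of $d_2>0$, $y_\star>0$, $K_P\ge 0$, $K_I>0$, $u_0\in\mathbb{R}$.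
   Context: This is the (time- and state-scaled) averaged model of a DC-DC Boost converter with no inductor resistance: $x_1$ is the scaled inductor current, $x_2$ the scaled capacitor (output) voltage, $u$ the duty cycle, $d_2>0$ the scaled load conductance, and the scaled source voltage is $1$. The controller is a PI controller acting on the voltage error $y_\star-x_2$, where $y_\star>0$ is the desired output voltage, $x_c$ is the integrator state, $K_P,K_I$ are the PI gains and $u_0$ is a designer-chosen constant. *)

(* Defs.v *)
From Stdlib Require Import Reals.
From Coquelicot Require Import Coquelicot.
Open Scope R_scope.

(* State chi = (x1, x2, xc) as a triple ((x1, x2), xc). *)
Definition st1 (c : R * R * R) : R := fst (fst c).
Definition st2 (c : R * R * R) : R := snd (fst c).
Definition st3 (c : R * R * R) : R := snd c.

Definition boost_PI (d2 ystar KP KI u0 : R) (c : R * R * R) : R * R * R :=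
  let x1 := st1 c in let x2 := st2 c in let xc := st3 c in
  let u := u0 + KI * xc + KP * (ystar - x2) in
  ((1 - x2 * u, - d2 * x2 + x1 * u), ystar - x2).

Definition dist3 (a b : R * R * R) : R :=
  sqrt ((st1 a - st1 b) ^ 2 + (st2 a - st2 b) ^ 2 + (st3 a - st3 b) ^ 2).

Definition is_solution (F : R * R * R -> R * R * R) (T : R) (x : R -> R * R * R) : Prop :=
  forall t, 0 <= t <= T ->
    is_derive (fun s => st1 (x s)) t (st1 (F (x t))) /\
    is_derive (fun s => st2 (x s)) t (st2 (F (x t))) /\
    is_derive (fun s => st3 (x s)) t (st3 (F (x t))).

Definition is_equilibrium (F : R * R * R -> R * R * R) (e : R * R * R) : Prop :=
  F e = ((0, 0), 0).

(* Lyapunov stability of e (forward in time): every solution starting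
   delta-close to e stays eps-close to e as long as it exists. *)
Definition lyapunov_stable (F : R * R * R -> R * R * R) (e : R * R * R) : Prop :=
  forall eps, 0 < eps -> exists delta, 0 < delta /\
    forall (T : R) (x : R -> R * R * R), 0 <= T -> is_solution F T x ->
      dist3 (x 0) e < delta -> forall t, 0 <= t <= T -> dist3 (x t) e < eps.

(* Main.v *)
Require Import Defs.
From Stdlib Require Import Reals Lra Lia Factorial ZArith Classical.
From Coquelicot Require Import Coquelicot.
Open Scope R_scope.

Definition is_pr (pr : R * R * R -> R) := pr = st1 \/ pr = st2 \/ pr = st3.

Lemma lip_cont (f : R -> R) K : 0 <= K ->
  (forall s t, Rabs (f s - f t) <= K * Rabs (s - t)) -> forall t, continuous f t.
Proof.
  intros HK H t. apply continuity_pt_filterlim.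
  intros eps Heps. exists (eps / (K + 1)). split.
  { apply Rdiv_lt_0_compat; lra. }
  intros x [_ Hx]. unfold R_dist in *. simpl in *. unfold R_dist in *.
  eapply Rle_lt_trans. apply H.
  apply Rle_lt_trans with (K * (eps / (K+1))).
  apply Rmult_le_compat_l; lra.
  apply Rlt_le_trans with ((K+1) * (eps / (K+1))).
  apply Rmult_lt_compat_r. apply Rdiv_lt_0_compat; lra. lra.
  right; field; lra.
Qed.

Lemma RInt_diff_bound (g : R -> R) K s t : (forall u, continuous g u) ->
  (forall u, Rabs (g u) <= K) -> Rabs (RInt g 0 s - RInt g 0 t) <= K * Rabs (s - t).
Proof.
  intros Hc Hb.
  assert (Hex : forall a b, ex_RInt g a b).
  { intros a b. apply (@ex_RInt_continuous R_CompleteNormedModule). intros; apply Hc. }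
  assert (E : @eq R (RInt g 0 s) (RInt g 0 t + RInt g t s)).
  { symmetry. apply (RInt_Chasles g 0 t s); auto. }
  rewrite E. assert (E2 : @eq R (RInt g 0 t + RInt g t s - RInt g 0 t) (RInt g t s)) by ring. rewrite E2.
  destruct (Rle_dec t s) as [Hts|Hts].
  - rewrite (Rabs_right (s - t)) by lra. rewrite Rmult_comm.
    apply abs_RInt_le_const; auto.
  - rewrite <- (opp_RInt_swap g s t) by auto.
    change (Rabs (- RInt g s t) <= K * Rabs (s - t)).
    rewrite Rabs_Ropp. rewrite (Rabs_left (s - t)) by lra.
    replace (- (s - t)) with (t - s) by ring. rewrite Rmult_comm.
    apply abs_RInt_le_const; auto. lra.
Qed.

Lemma int_pow_bound (g : R -> R) C k t : 0 <= C -> (forall u, continuous g u) ->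
  (forall u, Rabs u <= Rabs t -> Rabs (g u) <= C * Rabs u ^ k) ->
  Rabs (RInt g 0 t) <= C * Rabs t ^ (S k) / INR (S k).
Proof.
  intros HC Hc Hb.
  assert (Hex : forall a b, ex_RInt g a b).
  { intros a b. apply (@ex_RInt_continuous R_CompleteNormedModule). intros; apply Hc. }
  assert (HS : INR (S k) <> 0) by (apply not_0_INR; auto).
  destruct (Rle_dec 0 t) as [Ht|Ht].
  - set (F := fun u => C * u ^ S k / INR (S k)).
    set (h := fun u => C * u ^ k).
    assert (Hd : forall x, is_derive F x (h x)).
    { intros x. unfold F, h. auto_derive. auto.
      change (match k with 0%nat => 1 | S _ => INR k + 1 end) with (INR (S k)).
      field. auto. }
    assert (HI : is_RInt h 0 t (minus (F t) (F 0))).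
    { apply (@is_RInt_derive R_CompleteNormedModule). intros; apply Hd.
      intros x _. apply (ex_derive_continuous h). unfold h. auto_derive. auto. }
    assert (Hexh : ex_RInt h 0 t) by (eexists; eauto).
    assert (Ev : RInt h 0 t = C * t ^ S k / INR (S k)).
    { rewrite (is_RInt_unique _ _ _ _ HI). unfold F, minus, plus, opp; simpl.
      field. auto. }
    rewrite (Rabs_right t) by lra.
    apply Rabs_le. split.
    + assert (RInt (fun u => - h u) 0 t <= RInt g 0 t).
      { apply RInt_le; auto. apply ex_RInt_opp in Hexh. exact Hexh.
        intros x Hx. unfold h. assert (Hbx := Hb x). assert (Hxt : Rabs x <= Rabs t) by (unfold Rabs; repeat destruct Rcase_abs; lra). specialize (Hbx Hxt). apply Rabs_le_between in Hbx.
        rewrite Rabs_right in Hbx by lra. lra. }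
      assert (Eo : @eq R (RInt (fun u => - h u) 0 t) (- RInt h 0 t)) by exact (RInt_opp h 0 t Hexh). rewrite Eo in H.
      rewrite Ev in H. lra.
    + rewrite <- Ev. apply RInt_le; auto.
      intros x Hx. unfold h. assert (Hbx := Hb x). assert (Hxt : Rabs x <= Rabs t) by (unfold Rabs; repeat destruct Rcase_abs; lra). specialize (Hbx Hxt). apply Rabs_le_between in Hbx.
      rewrite Rabs_right in Hbx by lra. lra.
  - set (F := fun u => - (C * (- u) ^ S k / INR (S k))).
    set (h := fun u => C * (- u) ^ k).
    assert (Hd : forall x, is_derive F x (h x)).
    { intros x. unfold F, h. auto_derive. auto.
      change (match k with 0%nat => 1 | S _ => INR k + 1 end) with (INR (S k)).
      field. auto. }
    assert (HI : is_RInt h t 0 (minus (F 0) (F t))).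
    { apply (@is_RInt_derive R_CompleteNormedModule). intros; apply Hd.
      intros x _. apply (ex_derive_continuous h). unfold h. auto_derive. auto. }
    assert (Hexh : ex_RInt h t 0) by (eexists; eauto).
    assert (Ev : RInt h t 0 = C * (- t) ^ S k / INR (S k)).
    { rewrite (is_RInt_unique _ _ _ _ HI). unfold F, minus, plus, opp; simpl.
      field. auto. }
    rewrite <- (opp_RInt_swap g t 0) by auto.
    change (Rabs (- RInt g t 0) <= C * Rabs t ^ S k / INR (S k)).
    rewrite Rabs_Ropp. rewrite (Rabs_left t) by lra.
    apply Rabs_le. split.
    + assert (RInt (fun u => - h u) t 0 <= RInt g t 0).
      { apply RInt_le; auto. lra. apply ex_RInt_opp in Hexh. exact Hexh.
        intros x Hx. unfold h. assert (Hbx := Hb x). assert (Hxt : Rabs x <= Rabs t) by (unfold Rabs; repeat destruct Rcase_abs; lra). specialize (Hbx Hxt). apply Rabs_le_between in Hbx.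
        rewrite Rabs_left in Hbx by lra. lra. }
      assert (Eo : @eq R (RInt (fun u => - h u) t 0) (- RInt h t 0)) by exact (RInt_opp h t 0 Hexh). rewrite Eo in H.
      rewrite Ev in H. lra.
    + rewrite <- Ev. apply RInt_le; auto. lra.
      intros x Hx. unfold h. assert (Hbx := Hb x). assert (Hxt : Rabs x <= Rabs t) by (unfold Rabs; repeat destruct Rcase_abs; lra). specialize (Hbx Hxt). apply Rabs_le_between in Hbx.
      rewrite Rabs_left in Hbx by lra. lra.
Qed.

Definition Gnice (G : R * R * R -> R * R * R) (M L : R) :=
  0 <= M /\ 0 < L /\ (forall z pr, is_pr pr -> Rabs (pr (G z)) <= M) /\
  (forall z z' d, Rabs (st1 z - st1 z') <= d -> Rabs (st2 z - st2 z') <= d ->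
     Rabs (st3 z - st3 z') <= d -> forall pr, is_pr pr -> Rabs (pr (G z) - pr (G z')) <= L * d).

Fixpoint pic (G : R * R * R -> R * R * R) (y0 : R * R * R) (n : nat) (t : R) : R * R * R :=
  match n with
  | O => y0
  | S m => ((st1 y0 + RInt (fun s => st1 (G (pic G y0 m s))) 0 t,
             st2 y0 + RInt (fun s => st2 (G (pic G y0 m s))) 0 t),
             st3 y0 + RInt (fun s => st3 (G (pic G y0 m s))) 0 t)
  end.

Lemma pic_S G y0 m t pr : is_pr pr ->
  pr (pic G y0 (S m) t) = pr y0 + RInt (fun s => pr (G (pic G y0 m s))) 0 t.
Proof. intros [->|[-> | ->]]; reflexivity. Qed.

Lemma st_pr : is_pr st1 /\ is_pr st2 /\ is_pr st3.
Proof. unfold is_pr; tauto. Qed.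

Lemma pic_lip G M L y0 : Gnice G M L -> forall n pr s t, is_pr pr ->
  Rabs (pr (pic G y0 n s) - pr (pic G y0 n t)) <= M * Rabs (s - t).
Proof.
  intros [HM [HL [Hb Hl]]] n. induction n; intros pr s t Hpr.
  - simpl. rewrite Rminus_diag, Rabs_R0. apply Rmult_le_pos; auto; apply Rabs_pos.
  - rewrite !pic_S by auto.
    assert (E0 : @eq R (pr y0 + RInt (fun s0 => pr (G (pic G y0 n s0))) 0 s -
      (pr y0 + RInt (fun s0 => pr (G (pic G y0 n s0))) 0 t))
      (RInt (fun s0 => pr (G (pic G y0 n s0))) 0 s - RInt (fun s0 => pr (G (pic G y0 n s0))) 0 t))
      by ring. rewrite E0.
    apply RInt_diff_bound; auto.
    apply lip_cont with (L * M). apply Rmult_le_pos; lra.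
    intros a b. rewrite Rmult_assoc. apply Hl; auto; apply IHn; apply st_pr.
Qed.

Lemma picG_cont G M L y0 : Gnice G M L -> forall n pr, is_pr pr ->
  forall u, continuous (fun s => pr (G (pic G y0 n s))) u.
Proof.
  intros HG n pr Hpr. destruct HG as [HM [HL [Hb Hl]]].
  apply lip_cont with (L * M). apply Rmult_le_pos; lra.
  intros a b. rewrite Rmult_assoc. apply Hl; auto; apply (pic_lip G M L); try split; auto; apply st_pr.
Qed.

Lemma pic_delta G M L y0 : Gnice G M L -> forall n pr t, is_pr pr ->
  Rabs (pr (pic G y0 (S n) t) - pr (pic G y0 n t)) <= M * L ^ n * Rabs t ^ (S n) / INR (fact (S n)).
Proof.
  intros HG n. induction n; intros pr t Hpr.
  - rewrite pic_S by auto. simpl pic.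
    assert (E0 : @eq R (pr y0 + RInt (fun s => pr (G y0)) 0 t - pr y0) (RInt (fun s => pr (G y0)) 0 t)) by ring. rewrite E0.
    replace (M * L ^ 0 * Rabs t ^ 1 / INR (fact 1)) with (M * Rabs t ^ 1 / INR 1) by (simpl; field).
    destruct HG as [HM [HL [Hb Hl]]].
    apply int_pow_bound; auto. intros; apply continuous_const.
    intros u _. simpl. rewrite Rmult_1_r. apply Hb; auto.
  - rewrite !pic_S by auto.
    set (g1 := fun s => pr (G (pic G y0 (S n) s))).
    set (g0 := fun s => pr (G (pic G y0 n s))).
    assert (Hc1 : forall u, continuous g1 u) by (apply (picG_cont G M L); auto).
    assert (Hc0 : forall u, continuous g0 u) by (apply (picG_cont G M L); auto).
    assert (Hex1 : ex_RInt g1 0 t).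
    { apply (@ex_RInt_continuous R_CompleteNormedModule). intros; apply Hc1. }
    assert (Hex0 : ex_RInt g0 0 t).
    { apply (@ex_RInt_continuous R_CompleteNormedModule). intros; apply Hc0. }
    assert (E : @eq R (pr y0 + RInt g1 0 t - (pr y0 + RInt g0 0 t)) (RInt (fun s => g1 s - g0 s) 0 t)).
    { assert (Em : @eq R (RInt (fun s => g1 s - g0 s) 0 t) (RInt g1 0 t - RInt g0 0 t)) by exact (RInt_minus g1 g0 0 t Hex1 Hex0).
      rewrite Em. ring. }
    rewrite E. destruct HG as [HM [HL [Hb Hl]]].
    replace (M * L ^ S n * Rabs t ^ S (S n) / INR (fact (S (S n)))) with
      ((L * (M * L ^ n / INR (fact (S n)))) * Rabs t ^ S (S n) / INR (S (S n))).
    2:{ rewrite (fact_simpl (S n)), mult_INR. simpl pow. field.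
        split; apply not_0_INR; try lia. apply fact_neq_0. }
    apply int_pow_bound.
    + apply Rmult_le_pos. lra. apply Rmult_le_pos. apply Rmult_le_pos. auto. apply pow_le; lra.
      left; apply Rinv_0_lt_compat, lt_0_INR, lt_O_fact.
    + intros u. apply (continuous_minus g1 g0); auto.
    + intros u _. unfold g1, g0.
      replace (L * (M * L ^ n / INR (fact (S n))) * Rabs u ^ S n) with
        (L * (M * L ^ n * Rabs u ^ S n / INR (fact (S n)))) by (field; apply not_0_INR, fact_neq_0).
      apply Hl; auto; apply IHn; apply st_pr.
Qed.

Lemma nat_above (a : R) : 0 <= a -> exists N : nat, a < INR N.
Proof.
  intros Ha. destruct (archimed a) as [H1 _].
  assert (Hp : (0 < up a)%Z) by (apply lt_0_IZR; lra).
  exists (Z.to_nat (up a)). rewrite INR_IZR_INZ, Z2Nat.id by lia. exact H1.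
Qed.

Lemma fact_ge1 n : 1 <= INR (fact n).
Proof. apply (le_INR 1). apply lt_O_fact. Qed.

Lemma pow_fact_bound a : 0 <= a -> exists K, 0 <= K /\ forall n, a ^ n / INR (fact n) <= K.
Proof.
  intros Ha. destruct (nat_above a Ha) as [N HN].
  exists ((1 + a) ^ N). split. apply pow_le; lra.
  assert (Hsmall : forall n, (n <= N)%nat -> a ^ n / INR (fact n) <= (1 + a) ^ N).
  { intros n Hn. apply Rle_trans with (a ^ n).
    - unfold Rdiv. rewrite <- (Rmult_1_r (a ^ n)) at 2. apply Rmult_le_compat_l.
      apply pow_le; lra. rewrite <- Rinv_1. apply Rinv_le_contravar. lra. apply fact_ge1.
    - apply Rle_trans with ((1 + a) ^ n). apply pow_incr; lra.
      apply Rle_pow; lra || auto. }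
  intros n. induction n.
  - apply Hsmall. lia.
  - destruct (le_lt_dec (S n) N) as [Hle|Hlt]. apply Hsmall; auto.
    apply Rle_trans with (a ^ n / INR (fact n)); auto.
    rewrite fact_simpl, mult_INR. simpl pow.
    assert (HNn : INR N <= INR (S n)) by (apply le_INR; lia).
    assert (Hf : 0 < INR (fact n)) by (apply lt_0_INR, lt_O_fact).
    assert (Han : 0 <= a ^ n) by (apply pow_le; lra).
    unfold Rdiv. rewrite Rinv_mult.
    replace (a * a ^ n * (/ INR (S n) * / INR (fact n))) with
      ((a / INR (S n)) * (a ^ n * / INR (fact n))) by (unfold Rdiv; ring).
    rewrite <- (Rmult_1_l (a ^ n * / INR (fact n))) at 2.
    apply Rmult_le_compat_r. apply Rmult_le_pos; auto. left; apply Rinv_0_lt_compat; auto.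
    apply Rmult_le_reg_r with (INR (S n)). lra. unfold Rdiv. rewrite Rmult_assoc, Rinv_l by lra. lra.
Qed.

Lemma pic_geom G M L y0 : Gnice G M L -> forall Sb, 0 <= Sb -> exists K, 0 <= K /\
  forall n pr t, is_pr pr -> Rabs t <= Sb ->
  Rabs (pr (pic G y0 (S n) t) - pr (pic G y0 n t)) <= K * (/ 2) ^ n.
Proof.
  intros HG Sb HS. assert (HG' := HG). destruct HG' as [HM [HL _]].
  destruct (pow_fact_bound (2 * L * Sb)) as [K0 [HK0 HK]]. apply Rmult_le_pos; lra.
  exists (M * Sb * K0). split. apply Rmult_le_pos; auto. apply Rmult_le_pos; auto.
  intros n pr t Hpr Ht.
  eapply Rle_trans. apply (pic_delta G M L); auto.
  assert (Hf : 0 < INR (fact n)) by (apply lt_0_INR, lt_O_fact).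
  assert (Hf1 : INR (fact n) <= INR (fact (S n))).
  { rewrite fact_simpl, mult_INR. rewrite <- (Rmult_1_l (INR (fact n))) at 1.
    apply Rmult_le_compat_r; lra || (apply (le_INR 1); lia). }
  apply Rle_trans with (M * L ^ n * Sb ^ S n / INR (fact n)).
  - unfold Rdiv. apply Rmult_le_compat.
    + apply Rmult_le_pos. apply Rmult_le_pos; auto. apply pow_le; lra. apply pow_le, Rabs_pos.
    + left; apply Rinv_0_lt_compat. apply lt_0_INR, lt_O_fact.
    + apply Rmult_le_compat_l. apply Rmult_le_pos; auto. apply pow_le; lra.
      apply pow_incr. split; auto. apply Rabs_pos.
    + apply Rinv_le_contravar; auto.
  - specialize (HK n).
    replace (M * L ^ n * Sb ^ S n / INR (fact n)) with
      (M * Sb * ((2 * L * Sb) ^ n / INR (fact n)) * (/ 2) ^ n).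
    2:{ replace ((2 * L * Sb) ^ n) with (2 ^ n * L ^ n * Sb ^ n) by (rewrite !Rpow_mult_distr; ring).
        simpl pow. assert (H2 : 2 ^ n * (/ 2) ^ n = 1) by (rewrite <- Rpow_mult_distr, Rinv_r, pow1; lra).
        transitivity (M * Sb * (L ^ n * Sb ^ n / INR (fact n)) * (2 ^ n * (/ 2) ^ n)).
        - unfold Rdiv. ring.
        - rewrite H2. unfold Rdiv. ring. }
    apply Rmult_le_compat_r. apply pow_le; lra.
    apply Rmult_le_compat_l. apply Rmult_le_pos; auto. auto.
Qed.

Lemma half_pow_small c eps : 0 < eps -> exists N, forall n, (N <= n)%nat -> Rabs c * (/ 2) ^ n < eps.
Proof.
  intros He. destruct (pow_lt_1_zero (/ 2)) with (y := eps / (Rabs c + 1)) as [N HN].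
  rewrite Rabs_right; lra. apply Rdiv_lt_0_compat; auto. assert (0 <= Rabs c) by apply Rabs_pos; lra.
  exists N. intros n Hn. specialize (HN n Hn). rewrite Rabs_right in HN.
  2:{ apply Rle_ge, pow_le; lra. }
  assert (Hc : 0 <= Rabs c) by apply Rabs_pos.
  apply Rle_lt_trans with ((Rabs c + 1) * (/ 2) ^ n).
  apply Rmult_le_compat_r. apply pow_le; lra. lra.
  apply Rmult_lt_reg_l with (/ (Rabs c + 1)). apply Rinv_0_lt_compat; lra.
  rewrite <- Rmult_assoc, Rinv_l by lra. lra.
Qed.

Lemma le_geom a b c : (forall n, a <= b + c * (/ 2) ^ n) -> a <= b.
Proof.
  intros H. destruct (Rle_dec a b) as [|Hab]; auto. exfalso.
  destruct (half_pow_small c (a - b)) as [N HN]. lra.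
  specialize (HN N (le_n N)). specialize (H N).
  assert (c * (/ 2) ^ N <= Rabs c * (/ 2) ^ N).
  { apply Rmult_le_compat_r. apply pow_le; lra. apply Rle_abs. }
  lra.
Qed.

Lemma geom_cauchy_lim (u : nat -> R) c : 0 <= c ->
  (forall n m, Rabs (u (n + m)%nat - u n) <= c * (/ 2) ^ n) ->
  exists l, is_lim_seq u l /\ forall n, Rabs (l - u n) <= c * (/ 2) ^ n.
Proof.
  intros Hc H.
  assert (Hcau : ex_lim_seq_cauchy u).
  { intros eps. destruct (half_pow_small (2 * c) eps) as [N HN]. apply cond_pos.
    exists N. intros n m Hn Hm.
    replace n with (N + (n - N))%nat by lia. replace m with (N + (m - N))%nat by lia.
    assert (H1 := H N (n - N)%nat). assert (H2 := H N (m - N)%nat).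
    specialize (HN N (le_n N)). rewrite Rabs_right in HN by lra.
    replace (u (N + (n - N))%nat - u (N + (m - N))%nat) with
      ((u (N + (n - N))%nat - u N) - (u (N + (m - N))%nat - u N)) by ring.
    eapply Rle_lt_trans. apply Rabs_triang. rewrite Rabs_Ropp. lra. }
  apply ex_lim_seq_cauchy_corr in Hcau. destruct Hcau as [l Hl].
  exists l. split; auto. intros n.
  assert (Hv : is_lim_seq (fun m => Rabs (u (m + n)%nat - u n)) (Rabs (l - u n))).
  { apply (is_lim_seq_abs _ (Finite (l - u n))).
    apply is_lim_seq_minus'. apply (is_lim_seq_incr_n u n l). auto. apply is_lim_seq_const. }
  assert (Hle := is_lim_seq_le _ _ _ _ (fun m => Rle_trans _ _ _ (Req_le _ _ (f_equal (fun k => Rabs (u k - u n)) (Nat.add_comm m n))) (H n m)) Hv (is_lim_seq_const (c * (/ 2) ^ n))).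
  exact Hle.
Qed.

Lemma pic_cauchy G M L y0 : Gnice G M L -> forall Sb, 0 <= Sb -> exists K, 0 <= K /\
  forall n m pr t, is_pr pr -> Rabs t <= Sb ->
  Rabs (pr (pic G y0 (n + m)%nat t) - pr (pic G y0 n t)) <= 2 * K * (/ 2) ^ n - 2 * K * (/ 2) ^ (n + m).
Proof.
  intros HG Sb HS. destruct (pic_geom G M L y0 HG Sb HS) as [K [HK Hb]].
  exists K. split; auto. intros n m pr t Hpr Ht. induction m.
  - rewrite Nat.add_0_r, Rminus_diag, Rabs_R0. lra.
  - replace (n + S m)%nat with (S (n + m)) by lia.
    replace (pr (pic G y0 (S (n + m)) t) - pr (pic G y0 n t)) with
      ((pr (pic G y0 (S (n + m)) t) - pr (pic G y0 (n + m) t)) + (pr (pic G y0 (n + m) t) - pr (pic G y0 n t))) by ring.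
    eapply Rle_trans. apply Rabs_triang.
    specialize (Hb (n + m)%nat pr t Hpr Ht). simpl pow. lra.
Qed.

Definition ysol G y0 (t : R) : R * R * R :=
  ((real (Lim_seq (fun n => st1 (pic G y0 n t))), real (Lim_seq (fun n => st2 (pic G y0 n t)))),
    real (Lim_seq (fun n => st3 (pic G y0 n t)))).

Lemma ysol_pr G y0 t pr : is_pr pr -> pr (ysol G y0 t) = real (Lim_seq (fun n => pr (pic G y0 n t))).
Proof. intros [->|[-> | ->]]; reflexivity. Qed.

Lemma ysol_approx G M L y0 : Gnice G M L -> forall Sb, 0 <= Sb -> exists K, 0 <= K /\
  forall n pr t, is_pr pr -> Rabs t <= Sb ->
  Rabs (pr (ysol G y0 t) - pr (pic G y0 n t)) <= 2 * K * (/ 2) ^ n.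
Proof.
  intros HG Sb HS. destruct (pic_cauchy G M L y0 HG Sb HS) as [K [HK Hb]].
  exists K. split; auto. intros n pr t Hpr Ht.
  destruct (geom_cauchy_lim (fun n => pr (pic G y0 n t)) (2 * K)) as [l [Hl Hlb]]. lra.
  { intros n0 m. specialize (Hb n0 m pr t Hpr Ht).
    assert (0 <= 2 * K * (/ 2) ^ (n0 + m)) by (apply Rmult_le_pos; [lra | apply pow_le; lra]). lra. }
  rewrite ysol_pr by auto. rewrite (is_lim_seq_unique _ _ Hl). simpl. apply Hlb.
Qed.

Lemma ysol_lip G M L y0 : Gnice G M L -> forall pr s t, is_pr pr ->
  Rabs (pr (ysol G y0 s) - pr (ysol G y0 t)) <= M * Rabs (s - t).
Proof.
  intros HG pr s t Hpr.
  destruct (ysol_approx G M L y0 HG (Rabs s + Rabs t)) as [K [HK Hb]].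
  assert (0 <= Rabs s) by apply Rabs_pos. assert (0 <= Rabs t) by apply Rabs_pos. lra.
  apply (le_geom _ _ (4 * K)). intros n.
  assert (H1 := Hb n pr s Hpr). assert (H2 := Hb n pr t Hpr).
  assert (H3 := pic_lip G M L y0 HG n pr s t Hpr).
  assert (0 <= Rabs t) by apply Rabs_pos. assert (0 <= Rabs s) by apply Rabs_pos.
  specialize (H1 ltac:(lra)). specialize (H2 ltac:(lra)).
  replace (pr (ysol G y0 s) - pr (ysol G y0 t)) with
    ((pr (ysol G y0 s) - pr (pic G y0 n s)) + (pr (pic G y0 n s) - pr (pic G y0 n t))
     - (pr (ysol G y0 t) - pr (pic G y0 n t))) by ring.
  eapply Rle_trans. apply Rabs_triang. rewrite Rabs_Ropp.
  eapply Rle_trans. apply Rplus_le_compat_r. apply Rabs_triang. lra.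
Qed.

Lemma ysolG_cont G M L y0 : Gnice G M L -> forall pr, is_pr pr ->
  forall u, continuous (fun s => pr (G (ysol G y0 s))) u.
Proof.
  intros HG pr Hpr. assert (HG' := HG). destruct HG' as [HM [HL [Hb Hl]]].
  apply lip_cont with (L * M). apply Rmult_le_pos; lra.
  intros a b. rewrite Rmult_assoc. apply Hl; auto; apply (ysol_lip G M L); auto; apply st_pr.
Qed.

Lemma ysol_int G M L y0 : Gnice G M L -> forall pr t, is_pr pr ->
  pr (ysol G y0 t) = pr y0 + RInt (fun s => pr (G (ysol G y0 s))) 0 t.
Proof.
  intros HG pr t Hpr.
  destruct (ysol_approx G M L y0 HG (Rabs t)) as [K [HK Hb]]. apply Rabs_pos.
  assert (HG' := HG). destruct HG' as [HM [HL [HGb HGl]]].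
  set (gy := fun s => pr (G (ysol G y0 s))).
  assert (Hcy : forall u, continuous gy u) by (apply (ysolG_cont G M L); auto).
  assert (Hexy : ex_RInt gy 0 t).
  { apply (@ex_RInt_continuous R_CompleteNormedModule). intros; apply Hcy. }
  assert (Habs : Rabs (pr (ysol G y0 t) - (pr y0 + RInt gy 0 t)) <= 0).
  { apply (le_geom _ _ (K + 2 * L * K * Rabs t)). intros n.
    set (gn := fun s => pr (G (pic G y0 n s))).
    assert (Hcn : forall u, continuous gn u) by (apply (picG_cont G M L); auto).
    assert (Hexn : ex_RInt gn 0 t).
    { apply (@ex_RInt_continuous R_CompleteNormedModule). intros; apply Hcn. }
    assert (E : @eq R (pr (ysol G y0 t) - (pr y0 + RInt gy 0 t))
      ((pr (ysol G y0 t) - pr (pic G y0 (S n) t)) + RInt (fun s => gn s - gy s) 0 t)).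
    { rewrite pic_S by auto.
      assert (Em : @eq R (RInt (fun s => gn s - gy s) 0 t) (RInt gn 0 t - RInt gy 0 t))
        by exact (RInt_minus gn gy 0 t Hexn Hexy).
      rewrite Em. unfold gn. ring. }
    rewrite E. eapply Rle_trans. apply Rabs_triang.
    assert (H1 := Hb (S n) pr t Hpr (Rle_refl _)).
    assert (H2 : Rabs (RInt (fun s => gn s - gy s) 0 t) <= (L * (2 * K * (/ 2) ^ n)) * Rabs t ^ 1 / INR 1).
    { apply int_pow_bound.
      apply Rmult_le_pos. lra. apply Rmult_le_pos. lra. apply pow_le; lra.
      intros u. apply (continuous_minus gn gy); auto.
      intros u Hu. simpl. rewrite Rmult_1_r. unfold gn, gy.
      rewrite <- Rabs_Ropp. rewrite Ropp_minus_distr.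
      apply HGl; auto; apply (Hb n); auto; apply st_pr. }
    simpl pow in H1, H2. simpl INR in H2.
    assert (E2 : 2 * K * (/ 2 * (/ 2) ^ n) = K * (/ 2) ^ n) by field.
    rewrite E2 in H1.
    replace (L * (2 * K * (/ 2) ^ n) * (Rabs t * 1) / 1) with (2 * L * K * Rabs t * (/ 2) ^ n) in H2 by field.
    lra. }
  assert (Z := Rabs_pos (pr (ysol G y0 t) - (pr y0 + RInt gy 0 t))).
  assert (Rabs (pr (ysol G y0 t) - (pr y0 + RInt gy 0 t)) = 0) by lra.
  apply Rabs_eq_0 in H. lra.
Qed.

Lemma ysol_deriv G M L y0 : Gnice G M L -> forall pr t, is_pr pr ->
  is_derive (fun s => pr (ysol G y0 s)) t (pr (G (ysol G y0 t))).
Proof.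
  intros HG pr t Hpr.
  set (gy := fun s => pr (G (ysol G y0 s))).
  assert (Hcy : forall u, continuous gy u) by (apply (ysolG_cont G M L); auto).
  apply is_derive_ext with (fun s => pr y0 + RInt gy 0 s).
  { intros s. symmetry. apply (ysol_int G M L); auto. }
  replace (pr (G (ysol G y0 t))) with (0 + gy t) by (unfold gy; ring).
  apply (is_derive_plus (fun _ => pr y0) (fun s => RInt gy 0 s)).
  apply (@is_derive_const R_AbsRing R_NormedModule).
  apply (is_derive_RInt gy (fun s => RInt gy 0 s) 0 t).
  exists (mkposreal 1 Rlt_0_1). intros b _. apply (@RInt_correct R_CompleteNormedModule).
  apply (@ex_RInt_continuous R_CompleteNormedModule). intros; apply Hcy.
  apply Hcy.
Qed.

Lemma ysol_0 G y0 : ysol G y0 0 = y0.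
Proof.
  destruct y0 as [[a b] c]. unfold ysol.
  assert (Hk : forall pr, is_pr pr -> forall n, pr (pic G ((a, b), c) n 0) = pr ((a, b), c)).
  { intros pr Hpr n. destruct n. reflexivity. rewrite pic_S by auto. rewrite RInt_point. 
    unfold zero; simpl. ring. }
  rewrite (Lim_seq_ext _ _ (Hk st1 ltac:(apply st_pr))).
  rewrite (Lim_seq_ext _ _ (Hk st2 ltac:(apply st_pr))).
  rewrite (Lim_seq_ext _ _ (Hk st3 ltac:(apply st_pr))).
  rewrite !Lim_seq_const. reflexivity.
Qed.

Theorem ode_exists G M L : Gnice G M L -> forall y0, exists y : R -> R * R * R, y 0 = y0 /\
  (forall t pr, is_pr pr -> is_derive (fun s => pr (y s)) t (pr (G (y t)))) /\
  (forall pr s t, is_pr pr -> Rabs (pr (y s) - pr (y t)) <= M * Rabs (s - t)).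
Proof.
  intros HG y0. exists (ysol G y0). split. apply ysol_0. split.
  intros; apply (ysol_deriv G M L); auto.
  intros; apply (ysol_lip G M L); auto.
Qed.

Lemma abs_add_le x y A B : Rabs x <= A -> Rabs y <= B -> Rabs (x + y) <= A + B.
Proof. intros. eapply Rle_trans. apply Rabs_triang. lra. Qed.
Lemma abs_sub_le x y A B : Rabs x <= A -> Rabs y <= B -> Rabs (x - y) <= A + B.
Proof. intros. unfold Rminus. apply abs_add_le; auto. rewrite Rabs_Ropp; auto. Qed.
Lemma abs_mul_le x y A B : Rabs x <= A -> Rabs y <= B -> Rabs (x * y) <= A * B.
Proof.
  intros. rewrite Rabs_mult. apply Rmult_le_compat; auto; apply Rabs_pos.
Qed.
Lemma abs_prod_diff x y x' y' : Rabs (x * y - x' * y') <= Rabs (x - x') * Rabs y + Rabs x' * Rabs (y - y').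
Proof.
  replace (x * y - x' * y') with ((x - x') * y + x' * (y - y')) by ring.
  eapply Rle_trans. apply Rabs_triang. rewrite !Rabs_mult. lra.
Qed.

Definition cl (a m x : R) := Rmax (m - a) (Rmin (m + a) x).

Lemma cl_lip a m x x' : 0 <= a -> Rabs (cl a m x - cl a m x') <= Rabs (x - x').
Proof.
  intros Ha. unfold cl, Rmax, Rmin.
  repeat destruct Rle_dec; unfold Rabs; repeat destruct Rcase_abs; lra.
Qed.
Lemma cl_near a m x : 0 <= a -> Rabs (cl a m x - m) <= a.
Proof.
  intros Ha. unfold cl, Rmax, Rmin.
  repeat destruct Rle_dec; unfold Rabs; repeat destruct Rcase_abs; lra.
Qed.
Lemma cl_id a m x : Rabs (x - m) <= a -> cl a m x = x.
Proof.
  intros H. unfold cl, Rmax, Rmin. unfold Rabs in H.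
  repeat destruct Rle_dec; destruct Rcase_abs in H; lra.
Qed.

Definition clampc (a : R) (e c : R * R * R) : R * R * R :=
  ((cl a (st1 e) (st1 c), cl a (st2 e) (st2 c)), cl a (st3 e) (st3 c)).
Definition Gb d2 Y KP KI u0 a e (c : R * R * R) := boost_PI d2 Y KP KI u0 (clampc a e c).

Definition uof (Y KP KI u0 : R) (c : R * R * R) := u0 + KI * st3 c + KP * (Y - st2 c).

Lemma F_comp d2 Y KP KI u0 c :
  st1 (boost_PI d2 Y KP KI u0 c) = 1 - st2 c * uof Y KP KI u0 c /\
  st2 (boost_PI d2 Y KP KI u0 c) = - d2 * st2 c + st1 c * uof Y KP KI u0 c /\
  st3 (boost_PI d2 Y KP KI u0 c) = Y - st2 c.
Proof. unfold boost_PI, uof, st1, st2, st3; simpl. tauto. Qed.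

Lemma Gb_nice d2 Y KP KI u0 a e : 0 < d2 -> 0 < Y -> 0 <= KP -> 0 < KI -> 0 <= a ->
  exists M L, Gnice (Gb d2 Y KP KI u0 a e) M L.
Proof.
  intros Hd HY HKP HKI Ha.
  set (B1 := Rabs (st1 e) + a). set (B2 := Rabs (st2 e) + a). set (B3 := Rabs (st3 e) + a).
  set (Bu := Rabs u0 + KI * B3 + KP * (Y + B2)).
  assert (HB : forall c, Rabs (st1 (clampc a e c)) <= B1 /\ Rabs (st2 (clampc a e c)) <= B2 /\
     Rabs (st3 (clampc a e c)) <= B3).
  { intros c. unfold clampc, st1 at 1, st2 at 2, st3 at 3; simpl.
    assert (H1 := cl_near a (st1 e) (st1 c) Ha). assert (H2 := cl_near a (st2 e) (st2 c) Ha).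
    assert (H3 := cl_near a (st3 e) (st3 c) Ha).
    unfold B1, B2, B3. unfold st1, st2, st3 in *; simpl in *.
    repeat split; unfold Rabs in *; repeat destruct Rcase_abs; lra. }
  assert (HBp : 0 <= B1 /\ 0 <= B2 /\ 0 <= B3).
  { unfold B1, B2, B3. assert (H1 := Rabs_pos (st1 e)). assert (H2 := Rabs_pos (st2 e)).
    assert (H3 := Rabs_pos (st3 e)). lra. }
  assert (HBu : 0 <= Bu).
  { unfold Bu. assert (H1 := Rabs_pos u0). assert (0 <= KI * B3) by (apply Rmult_le_pos; lra).
    assert (0 <= KP * (Y + B2)) by (apply Rmult_le_pos; lra). lra. }
  assert (Hu : forall c, Rabs (uof Y KP KI u0 (clampc a e c)) <= Bu).
  { intros c. destruct (HB c) as [H1 [H2 H3]]. unfold uof, Bu.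
    apply abs_add_le. apply abs_add_le. lra. rewrite Rabs_mult, (Rabs_right KI) by lra.
    apply Rmult_le_compat_l; lra.
    rewrite Rabs_mult, (Rabs_right KP) by lra. apply Rmult_le_compat_l. lra.
    apply abs_sub_le; auto. rewrite Rabs_right; lra. }
  exists (1 + B2 * Bu + d2 * B2 + B1 * Bu + Y + B2).
  exists (1 + d2 + Bu + (B1 + B2) * (KI + KP)).
  destruct HBp as [HB1 [HB2 HB3]].
  split. { assert (0 <= B2 * Bu) by (apply Rmult_le_pos; lra).
           assert (0 <= d2 * B2) by (apply Rmult_le_pos; lra).
           assert (0 <= B1 * Bu) by (apply Rmult_le_pos; lra). lra. }
  split. { assert (0 <= (B1 + B2) * (KI + KP)) by (apply Rmult_le_pos; lra). lra. }
  split.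
  - intros z pr Hpr. unfold Gb. destruct (F_comp d2 Y KP KI u0 (clampc a e z)) as [E1 [E2 E3]].
    destruct (HB z) as [H1 [H2 H3]]. assert (Huz := Hu z).
    assert (0 <= B2 * Bu) by (apply Rmult_le_pos; lra).
    assert (0 <= d2 * B2) by (apply Rmult_le_pos; lra).
    assert (0 <= B1 * Bu) by (apply Rmult_le_pos; lra).
    destruct Hpr as [->|[-> | ->]].
    + rewrite E1. eapply Rle_trans. apply abs_sub_le. rewrite Rabs_R1; apply Rle_refl.
      apply abs_mul_le; eauto. lra.
    + rewrite E2. eapply Rle_trans. apply abs_add_le.
      rewrite Ropp_mult_distr_l_reverse, Rabs_Ropp. apply abs_mul_le.
      rewrite Rabs_right by lra. apply Rle_refl. eauto. apply abs_mul_le; eauto. lra.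
    + rewrite E3. eapply Rle_trans. apply abs_sub_le. rewrite Rabs_right by lra. apply Rle_refl.
      eauto. lra.
  - intros z z' d H1 H2 H3 pr Hpr. unfold Gb.
    destruct (F_comp d2 Y KP KI u0 (clampc a e z)) as [E1 [E2 E3]].
    destruct (F_comp d2 Y KP KI u0 (clampc a e z')) as [E1' [E2' E3']].
    assert (Hd0 : 0 <= d) by (eapply Rle_trans; [apply Rabs_pos | eauto]).
    assert (C1 : Rabs (st1 (clampc a e z) - st1 (clampc a e z')) <= d).
    { unfold clampc, st1 at 1 3; simpl. eapply Rle_trans. apply cl_lip; auto. auto. }
    assert (C2 : Rabs (st2 (clampc a e z) - st2 (clampc a e z')) <= d).
    { unfold clampc, st2 at 1 3; simpl. eapply Rle_trans. apply cl_lip; auto. auto. }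
    assert (C3 : Rabs (st3 (clampc a e z) - st3 (clampc a e z')) <= d).
    { unfold clampc, st3 at 1 3; simpl. eapply Rle_trans. apply cl_lip; auto. auto. }
    set (w := clampc a e z) in *. set (w' := clampc a e z') in *.
    assert (Hdu : Rabs (uof Y KP KI u0 w - uof Y KP KI u0 w') <= (KI + KP) * d).
    { unfold uof. replace (u0 + KI * st3 w + KP * (Y - st2 w) - (u0 + KI * st3 w' + KP * (Y - st2 w')))
        with (KI * (st3 w - st3 w') - KP * (st2 w - st2 w')) by ring.
      eapply Rle_trans. apply abs_sub_le.
      rewrite Rabs_mult, (Rabs_right KI) by lra. apply Rmult_le_compat_l. lra. exact C3.
      rewrite Rabs_mult, (Rabs_right KP) by lra. apply Rmult_le_compat_l. lra. exact C2.
      lra. }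
    destruct (HB z') as [Hb1 [Hb2 Hb3]]. fold w' in Hb1, Hb2, Hb3.
    assert (Huw := Hu z). fold w in Huw.
    assert (P1 : 0 <= B1 * ((KI + KP) * d)) by (apply Rmult_le_pos; [lra | apply Rmult_le_pos; lra]).
    assert (P2 : 0 <= B2 * ((KI + KP) * d)) by (apply Rmult_le_pos; [lra | apply Rmult_le_pos; lra]).
    assert (P3 : 0 <= d * Bu) by (apply Rmult_le_pos; lra).
    assert (P4 : 0 <= d2 * d) by (apply Rmult_le_pos; lra).
    assert (P5 : 0 <= KI * d) by (apply Rmult_le_pos; lra).
    assert (P6 : 0 <= KP * d) by (apply Rmult_le_pos; lra).
    destruct Hpr as [->|[-> | ->]].
    + rewrite E1, E1'.
      replace (1 - st2 w * uof Y KP KI u0 w - (1 - st2 w' * uof Y KP KI u0 w'))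
        with (- (st2 w * uof Y KP KI u0 w - st2 w' * uof Y KP KI u0 w')) by ring.
      rewrite Rabs_Ropp. eapply Rle_trans. apply abs_prod_diff.
      apply Rle_trans with (d * Bu + B2 * ((KI + KP) * d)).
      apply Rplus_le_compat; apply Rmult_le_compat; try apply Rabs_pos; auto.
      nra.
    + rewrite E2, E2'.
      replace (- d2 * st2 w + st1 w * uof Y KP KI u0 w - (- d2 * st2 w' + st1 w' * uof Y KP KI u0 w'))
        with (- (d2 * (st2 w - st2 w')) + (st1 w * uof Y KP KI u0 w - st1 w' * uof Y KP KI u0 w')) by ring.
      apply Rle_trans with (d2 * d + (d * Bu + B1 * ((KI + KP) * d))).
      apply abs_add_le. rewrite Rabs_Ropp, Rabs_mult, (Rabs_right d2) by lra.
      apply Rmult_le_compat_l. lra. exact C2.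
      eapply Rle_trans. apply abs_prod_diff.
      apply Rplus_le_compat; apply Rmult_le_compat; try apply Rabs_pos; auto.
      nra.
    + rewrite E3, E3'. replace (Y - st2 w - (Y - st2 w')) with (- (st2 w - st2 w')) by ring.
      rewrite Rabs_Ropp. eapply Rle_trans. exact C2.
      assert (0 <= (B1 + B2) * (KI + KP) * d) by (apply Rmult_le_pos; [apply Rmult_le_pos|]; lra).
      nra.
Qed.

Lemma cubic_root a2 a1 k : 0 < k -> exists lam, 0 < lam /\ lam ^ 3 + a2 * lam ^ 2 + a1 * lam - k = 0.
Proof.
  intros Hk. set (s1 := 1 + Rabs a1 + Rabs a2 + k).
  set (P := fun s => s ^ 3 + a2 * s ^ 2 + a1 * s - k).
  assert (Hc : continuity P) by (unfold P; reg).
  assert (H1 := Rabs_pos a1). assert (H2 := Rabs_pos a2).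
  assert (Hs1 : 1 <= s1) by (unfold s1; lra).
  assert (HP1 : 0 < P s1).
  { unfold P. assert (a2 * s1 ^ 2 >= - (Rabs a2 * s1 ^ 2)).
    { assert (- Rabs a2 <= a2) by (unfold Rabs; destruct Rcase_abs; lra).
      assert (0 <= s1 ^ 2) by (apply pow_le; lra). nra. }
    assert (a1 * s1 >= - (Rabs a1 * s1)).
    { assert (- Rabs a1 <= a1) by (unfold Rabs; destruct Rcase_abs; lra). nra. }
    assert (s1 ^ 3 = s1 * s1 ^ 2) by ring.
    assert (s1 * s1 ^ 2 = (1 + Rabs a1 + Rabs a2 + k) * s1 ^ 2) by (unfold s1; ring).
    assert (s1 <= s1 ^ 2) by nra.
    assert (1 <= s1 ^ 2) by nra.
    nra. }
  destruct (IVT P 0 s1 Hc) as [z [Hz HPz]]. lra. unfold P; simpl; lra. auto.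
  exists z. split. destruct Hz as [Hz _]. destruct Hz as [Hz|Hz]; auto.
  subst z. unfold P in HPz. simpl in HPz. lra.
  exact HPz.
Qed.

Lemma first_exit (g : R -> R) T : (forall t, continuous g t) -> g 0 < 0 -> 0 <= T ->
  (exists t, 0 <= t <= T /\ 0 <= g t) ->
  exists t1, 0 < t1 <= T /\ g t1 = 0 /\ forall s, 0 <= s < t1 -> g s < 0.
Proof.
  intros Hc Hg0 HT [t [Ht Hgt]].
  assert (Hcp : forall t, forall eps, 0 < eps -> exists del, 0 < del /\ forall s, Rabs (s - t) < del -> Rabs (g s - g t) < eps).
  { intros t0 eps He. assert (Ht0 := proj2 (continuity_pt_filterlim g t0) (Hc t0)).
    destruct (Ht0 eps He) as [del [Hdel H]]. exists del. split; auto.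
    intros s Hs. destruct (Req_dec s t0) as [->|Hne]. rewrite Rminus_diag, Rabs_R0; lra.
    apply (H s). split. unfold D_x, no_cond. split; auto. auto. }
  set (E := fun t => 0 <= t <= T /\ forall s, 0 <= s <= t -> g s < 0).
  assert (Hb : bound E). { exists T. intros x [Hx _]. lra. }
  assert (Hne : exists x, E x). { exists 0. split. lra. intros s Hs. replace s with 0 by lra. auto. }
  destruct (completeness E Hb Hne) as [t1 [Hub Hlub]].
  assert (Ht1 : 0 <= t1 <= T).
  { split. apply Hub. split; [lra|]. intros s Hs. replace s with 0 by lra. auto.
    apply Hlub. intros x [Hx _]. lra. }
  assert (Hbelow : forall s, 0 <= s < t1 -> g s < 0).
  { intros s Hs. destruct (classic (exists x, E x /\ s < x)) as [[x [[Hx1 Hx2] Hsx]]|Hno].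
    apply Hx2. lra.
    assert (is_upper_bound E s).
    { intros x Ex. destruct (Rle_dec x s); auto. exfalso. apply Hno. exists x. split; auto. lra. }
    specialize (Hlub s H). lra. }
  assert (Hge : 0 <= g t1).
  { destruct (Rle_dec 0 (g t1)) as [|Hlt]; auto. exfalso.
    destruct (Hcp t1 (- g t1)) as [del [Hdel Hd]]. lra.
    assert (Hnear : forall s, Rabs (s - t1) < del -> g s < 0).
    { intros s Hs. specialize (Hd s Hs). unfold Rabs in Hd. destruct Rcase_abs in Hd; lra. }
    destruct (Rlt_dec t1 T) as [HtT|HtT].
    - set (t' := Rmin (t1 + del / 2) T).
      assert (Et' : E t').
      { split. unfold t'. unfold Rmin; destruct Rle_dec; lra.
        intros s Hs. destruct (Rlt_dec s t1). apply Hbelow; lra.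
        apply Hnear. unfold t' in Hs. unfold Rmin in Hs; destruct Rle_dec in Hs;
        unfold Rabs; destruct Rcase_abs; lra. }
      specialize (Hub t' Et'). unfold t' in Hub. unfold Rmin in Hub; destruct Rle_dec in Hub; lra.
    - assert (t1 = T) by lra. subst t1.
      assert (g t < 0).
      { destruct (Rlt_dec t T). apply Hbelow; lra. apply Hnear. replace (t - T) with 0 by lra.
        rewrite Rabs_R0; lra. }
      lra. }
  assert (Hle : g t1 <= 0).
  { destruct (Rle_dec (g t1) 0) as [|Hlt]; auto. exfalso.
    destruct (Hcp t1 (g t1)) as [del [Hdel Hd]]. lra.
    destruct (Req_dec t1 0) as [H0|H0]. rewrite H0 in Hlt. lra.
    set (s := Rmax 0 (t1 - del / 2)).
    assert (g s < 0). { apply Hbelow. unfold s, Rmax; destruct Rle_dec; lra. }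
    assert (Rabs (s - t1) < del). { unfold s, Rmax; destruct Rle_dec; unfold Rabs; destruct Rcase_abs; lra. }
    specialize (Hd s H1). unfold Rabs in Hd. destruct Rcase_abs in Hd; lra. }
  exists t1. split. split. destruct Ht1 as [[H|H] _]; auto. subst t1. lra. lra.
  split. lra. auto.
Qed.

Lemma chet_ineq lam b0 b1 K beta nu xi et ze n1 n2 :
  0 < lam -> 0 < b0 -> 0 <= b1 -> 0 <= K -> 0 < beta -> 0 < nu ->
  3 * (K * (1 + b1 + 2 * (1 + lam + b0))) <= lam * Rmin 1 b0 * beta / 4 ->
  3 * (K * (1 + b1 + 2 * (1 + lam + b0))) * nu <= lam / 4 ->
  beta * nu <= 1 ->
  Rabs n1 <= K * (Rabs xi + Rabs et + Rabs ze) ^ 2 ->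
  Rabs n2 <= K * (Rabs xi + Rabs et + Rabs ze) ^ 2 ->
  Rabs xi + Rabs et + Rabs ze <= nu ->
  beta * (ze ^ 2 + b0 * et ^ 2) < xi ->
  lam * xi / 2 <= lam * xi + n2 + b1 * n1 + 2 * beta * b1 * ze ^ 2
     - 2 * beta * ze * (n2 - lam * n1) - 2 * beta * b0 * et * n1.
Proof.
  intros Hl Hb0 Hb1 HK Hbe Hnu HA1 HA2 Hbn Hn1 Hn2 HN Hreg.
  set (N := Rabs xi + Rabs et + Rabs ze) in *.
  set (A := K * (1 + b1 + 2 * (1 + lam + b0))) in *.
  set (m := Rmin 1 b0) in *.
  assert (Hm : 0 < m) by (unfold m, Rmin; destruct Rle_dec; lra).
  assert (Hm1 : m <= 1) by (unfold m, Rmin; destruct Rle_dec; lra).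
  assert (Hm2 : m <= b0) by (unfold m, Rmin; destruct Rle_dec; lra).
  assert (Hq : 0 <= ze ^ 2 + b0 * et ^ 2) by (assert (0 <= et^2) by apply pow2_ge_0; assert (0 <= ze^2) by apply pow2_ge_0; nra).
  assert (Hxi : 0 < xi) by nra.
  assert (Hax := Rabs_pos xi). assert (Hae := Rabs_pos et). assert (Haz := Rabs_pos ze).
  assert (Hz1 : Rabs ze <= nu) by (unfold N in HN; lra).
  assert (He1 : Rabs et <= nu) by (unfold N in HN; lra).
  assert (Hbe1 : beta * Rabs ze <= 1) by (apply Rle_trans with (beta * nu); auto; apply Rmult_le_compat_l; lra).
  assert (Hbe2 : beta * Rabs et <= 1) by (apply Rle_trans with (beta * nu); auto; apply Rmult_le_compat_l; lra).
  assert (HN0 : 0 <= N) by (unfold N; lra).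
  assert (HKN : 0 <= K * N ^ 2) by (apply Rmult_le_pos; auto; apply pow_le; auto).
  set (Er := n2 + b1 * n1 - 2 * beta * ze * (n2 - lam * n1) - 2 * beta * b0 * et * n1).
  assert (HEr : Rabs Er <= A * N ^ 2).
  { unfold Er.
    apply Rle_trans with (K * N ^ 2 + b1 * (K * N ^ 2) + 2 * (beta * Rabs ze) * ((1 + lam) * (K * N ^ 2))
       + 2 * b0 * (beta * Rabs et) * (K * N ^ 2)).
    - apply abs_sub_le. apply abs_sub_le. apply abs_add_le. auto.
      rewrite Rabs_mult, (Rabs_right b1) by lra. apply Rmult_le_compat_l; auto.
      replace (2 * beta * ze * (n2 - lam * n1)) with ((2 * beta * ze) * (n2 - lam * n1)) by ring.
      rewrite Rabs_mult. replace (2 * (beta * Rabs ze)) with (Rabs (2 * beta * ze)).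
      apply Rmult_le_compat_l. apply Rabs_pos.
      replace ((1 + lam) * (K * N ^ 2)) with (K * N ^ 2 + lam * (K * N ^ 2)) by ring.
      apply abs_sub_le. auto. rewrite Rabs_mult, (Rabs_right lam) by lra. apply Rmult_le_compat_l; lra.
      rewrite !Rabs_mult, (Rabs_right 2), (Rabs_right beta) by lra. ring.
      replace (2 * beta * b0 * et * n1) with ((2 * beta * b0 * et) * n1) by ring.
      rewrite Rabs_mult. replace (2 * b0 * (beta * Rabs et)) with (Rabs (2 * beta * b0 * et)).
      apply Rmult_le_compat_l. apply Rabs_pos. auto.
      rewrite !Rabs_mult, (Rabs_right 2), (Rabs_right beta), (Rabs_right b0) by lra. ring.
    - unfold A.
      assert (2 * (beta * Rabs ze) * ((1 + lam) * (K * N ^ 2)) <= 2 * ((1 + lam) * (K * N ^ 2))).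
      { assert (0 <= (1 + lam) * (K * N ^ 2)) by (apply Rmult_le_pos; lra). nra. }
      assert (2 * b0 * (beta * Rabs et) * (K * N ^ 2) <= 2 * b0 * (K * N ^ 2)).
      { assert (0 <= b0 * (K * N ^ 2)) by (apply Rmult_le_pos; lra). nra. }
      nra. }
  assert (HN2 : N ^ 2 <= 3 * (xi ^ 2 + et ^ 2 + ze ^ 2)).
  { unfold N. rewrite <- (pow2_abs xi), <- (pow2_abs et), <- (pow2_abs ze).
    assert (H1 := pow2_ge_0 (Rabs xi - Rabs et)). assert (H2 := pow2_ge_0 (Rabs et - Rabs ze)). assert (H3 := pow2_ge_0 (Rabs xi - Rabs ze)). nra. }
  assert (Hsq : m * (et ^ 2 + ze ^ 2) <= ze ^ 2 + b0 * et ^ 2).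
  { assert (0 <= et^2) by apply pow2_ge_0. assert (0 <= ze^2) by apply pow2_ge_0. nra. }
  assert (Hxi2 : xi ^ 2 <= nu * xi).
  { assert (xi <= nu) by (unfold N in HN; rewrite Rabs_right in HN by lra; lra). nra. }
  assert (HA0 : 0 <= A) by (unfold A; apply Rmult_le_pos; lra).
  assert (Hkey : A * N ^ 2 <= lam * xi / 2).
  { assert (Hs : beta * m * (et ^ 2 + ze ^ 2) <= xi) by nra.
    assert (A * N ^ 2 <= 3 * A * (xi ^ 2 + et ^ 2 + ze ^ 2)) by nra.
    assert (3 * A * xi ^ 2 <= lam * xi / 4) by nra.
    assert (3 * A * (et ^ 2 + ze ^ 2) * (beta * m) <= lam * xi / 4 * (beta * m)).
    { assert (0 <= et^2 + ze^2) by (assert (0 <= et^2) by apply pow2_ge_0; assert (0 <= ze^2) by apply pow2_ge_0; lra).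
      nra. }
    assert (3 * A * (et ^ 2 + ze ^ 2) <= lam * xi / 4).
    { apply Rmult_le_reg_r with (beta * m). nra. lra. }
    nra. }
  assert (Er >= - (lam * xi / 2)).
  { apply Rabs_le_between in HEr. lra. }
  assert (0 <= 2 * beta * b1 * ze ^ 2) by (assert (0 <= ze^2) by apply pow2_ge_0; apply Rmult_le_pos; nra).
  unfold Er in *. lra.
Qed.

Lemma coord_bounds lam b0 b1 Y a2 c3 KI KP U :
  0 < lam -> 0 < b0 -> 0 <= b1 -> 0 < Y -> 0 <= a2 -> 0 <= c3 -> 0 <= KI -> 0 <= KP -> 0 <= U ->
  exists K, 0 <= K /\ forall xi et ze r0 r1 r2,
   (lam * (b1 + lam) + b0) * r0 = xi - ze - (b1 + lam) * et ->
   r1 = et + lam * r0 -> r2 = ze + lam * r1 ->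
   Rabs (- (Y * (- r2 - a2 * r1 - c3 * r0)) * (KI * r0 + KP * r1)) <= K * (Rabs xi + Rabs et + Rabs ze) ^ 2 /\
   Rabs (U * (- r1) * (KI * r0 + KP * r1) + a2 * (Y * (- r2 - a2 * r1 - c3 * r0)) * (KI * r0 + KP * r1))
     <= K * (Rabs xi + Rabs et + Rabs ze) ^ 2.
Proof.
  intros Hl Hb0 Hb1 HY Ha2 Hc3 HKI HKP HU.
  set (D := lam * (b1 + lam) + b0).
  assert (HD : 0 < D) by (unfold D; nra).
  set (c0 := (2 + b1 + lam) / D).
  assert (Hc0 : 0 <= c0) by (unfold c0; apply Rmult_le_pos; [lra | left; apply Rinv_0_lt_compat; lra]).
  set (c1 := 1 + lam * c0). set (c2 := 1 + lam * c1).
  assert (Hc1 : 0 <= c1) by (unfold c1; nra). assert (Hc2 : 0 <= c2) by (unfold c2; nra).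
  set (cp := Y * (c2 + a2 * c1 + c3 * c0)). set (cv := KI * c0 + KP * c1).
  assert (Hcp : 0 <= cp) by (unfold cp; apply Rmult_le_pos; [lra|]; nra).
  assert (Hcv : 0 <= cv) by (unfold cv; nra).
  exists (cp * cv + U * c1 * cv + a2 * cp * cv). split.
  { assert (0 <= cp * cv) by nra. assert (0 <= U * c1 * cv) by (apply Rmult_le_pos; nra).
    assert (0 <= a2 * cp * cv) by (apply Rmult_le_pos; nra). lra. }
  intros xi et ze r0 r1 r2 H0 H1 H2.
  set (N := Rabs xi + Rabs et + Rabs ze).
  assert (Hax := Rabs_pos xi). assert (Hae := Rabs_pos et). assert (Haz := Rabs_pos ze).
  assert (HN : 0 <= N) by (unfold N; lra).
  assert (B0 : Rabs r0 <= c0 * N).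
  { assert (Rabs (D * r0) <= (2 + b1 + lam) * N).
    { fold D in H0. rewrite H0. apply Rle_trans with (Rabs xi + Rabs ze + (b1 + lam) * Rabs et).
      apply abs_sub_le. apply abs_sub_le; lra. rewrite Rabs_mult, (Rabs_right (b1 + lam)) by lra. lra.
      unfold N. nra. }
    rewrite Rabs_mult, (Rabs_right D) in H by lra.
    unfold c0. apply Rmult_le_reg_l with D. lra.
    replace (D * ((2 + b1 + lam) / D * N)) with ((2 + b1 + lam) * N) by (field; lra). lra. }
  assert (B1 : Rabs r1 <= c1 * N).
  { rewrite H1. unfold c1. apply Rle_trans with (N + lam * (c0 * N)).
    apply abs_add_le. unfold N; lra. rewrite Rabs_mult, (Rabs_right lam) by lra.
    apply Rmult_le_compat_l; lra. lra. }
  assert (B2 : Rabs r2 <= c2 * N).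
  { rewrite H2. unfold c2. apply Rle_trans with (N + lam * (c1 * N)).
    apply abs_add_le. unfold N; lra. rewrite Rabs_mult, (Rabs_right lam) by lra.
    apply Rmult_le_compat_l; lra. lra. }
  assert (Bp : Rabs (Y * (- r2 - a2 * r1 - c3 * r0)) <= cp * N).
  { rewrite Rabs_mult, (Rabs_right Y) by lra. unfold cp. rewrite Rmult_assoc.
    apply Rmult_le_compat_l. lra.
    apply Rle_trans with (c2 * N + a2 * (c1 * N) + c3 * (c0 * N)).
    apply abs_sub_le. apply abs_sub_le. rewrite Rabs_Ropp; auto.
    rewrite Rabs_mult, (Rabs_right a2) by lra. apply Rmult_le_compat_l; lra.
    rewrite Rabs_mult, (Rabs_right c3) by lra. apply Rmult_le_compat_l; lra. lra. }
  assert (Bv : Rabs (KI * r0 + KP * r1) <= cv * N).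
  { unfold cv. apply Rle_trans with (KI * (c0 * N) + KP * (c1 * N)).
    apply abs_add_le. rewrite Rabs_mult, (Rabs_right KI) by lra. apply Rmult_le_compat_l; lra.
    rewrite Rabs_mult, (Rabs_right KP) by lra. apply Rmult_le_compat_l; lra. lra. }
  assert (Hpv : Rabs (Y * (- r2 - a2 * r1 - c3 * r0) * (KI * r0 + KP * r1)) <= cp * cv * N ^ 2).
  { replace (cp * cv * N ^ 2) with ((cp * N) * (cv * N)) by ring. apply abs_mul_le; auto. }
  assert (Hqv : Rabs (U * (- r1) * (KI * r0 + KP * r1)) <= U * c1 * cv * N ^ 2).
  { replace (U * c1 * cv * N ^ 2) with ((U * (c1 * N)) * (cv * N)) by ring. apply abs_mul_le; auto.
    rewrite Rabs_mult, (Rabs_right U), Rabs_Ropp by lra. apply Rmult_le_compat_l; lra. }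
  assert (HN2 : 0 <= N ^ 2) by (apply pow_le; lra).
  assert (0 <= U * c1 * cv * N ^ 2) by (apply Rmult_le_pos; [|lra]; apply Rmult_le_pos; nra).
  assert (0 <= a2 * cp * cv * N ^ 2) by (apply Rmult_le_pos; [|lra]; apply Rmult_le_pos; nra).
  assert (0 <= cp * cv * N ^ 2) by (apply Rmult_le_pos; nra).
  split.
  - replace (- (Y * (- r2 - a2 * r1 - c3 * r0)) * (KI * r0 + KP * r1)) with
      (- (Y * (- r2 - a2 * r1 - c3 * r0) * (KI * r0 + KP * r1))) by ring.
    rewrite Rabs_Ropp. eapply Rle_trans. apply Hpv. nra.
  - eapply Rle_trans. apply abs_add_le. apply Hqv.
    replace (a2 * (Y * (- r2 - a2 * r1 - c3 * r0)) * (KI * r0 + KP * r1)) with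
      (a2 * (Y * (- r2 - a2 * r1 - c3 * r0) * (KI * r0 + KP * r1))) by ring.
    rewrite Rabs_mult, (Rabs_right a2) by lra. apply Rmult_le_compat_l. lra. apply Hpv.
    nra.
Qed.

Record prm := mkprm { pd2 : R; pY : R; pKP : R; pKI : R; pu0 : R; plam : R }.

Definition Uc P := / pY P.
Definition X1 P := pd2 P * pY P ^ 2.
Definition Xc P := (/ pY P - pu0 P) / pKI P.
Definition a2 P := pd2 P + X1 P * pKP P.
Definition a1 P := X1 P * pKI P + (/ pY P) ^ 2 - pKP P.
Definition b1 P := a2 P + plam P.
Definition b0 P := plam P ^ 2 + a2 P * plam P + a1 P.
Definition FP P := boost_PI (pd2 P) (pY P) (pKP P) (pKI P) (pu0 P).
Definition eq_pt P : R * R * R := ((X1 P, pY P), Xc P).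

Definition pp P (c : R * R * R) := st1 c - X1 P.
Definition qq P (c : R * R * R) := st2 c - pY P.
Definition rr P (c : R * R * R) := st3 c - Xc P.
Definition R0 P c := rr P c.
Definition R1 P c := - qq P c.
Definition R2 P c := - Uc P * pp P c + a2 P * qq P c - X1 P * pKI P * rr P c.
Definition XI P c := R2 P c + b1 P * R1 P c + b0 P * R0 P c.
Definition ET P c := R1 P c - plam P * R0 P c.
Definition ZE P c := R2 P c - plam P * R1 P c.
Definition vv P c := pKI P * rr P c - pKP P * qq P c.
Definition N1 P c := - pp P c * vv P c.
Definition N2 P c := Uc P * qq P c * vv P c + a2 P * pp P c * vv P c.

Definition dR0 (P : prm) (w : R * R * R) := st3 w.
Definition dR1 (P : prm) (w : R * R * R) := - st2 w.
Definition dR2 P (w : R * R * R) := - Uc P * st1 w + a2 P * st2 w - X1 P * pKI P * st3 w.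
Definition dXI P w := dR2 P w + b1 P * dR1 P w + b0 P * dR0 P w.
Definition dET P w := dR1 P w - plam P * dR0 P w.
Definition dZE P w := dR2 P w - plam P * dR1 P w.

Definition VV P beta c := XI P c - beta * (ZE P c ^ 2 + b0 P * ET P c ^ 2).
Definition Vd P beta c w := dXI P w - beta * (2 * ZE P c * dZE P w + b0 P * (2 * ET P c * dET P w)).

Lemma id_xi P c : pY P <> 0 -> pKI P <> 0 -> plam P * b0 P = pKI P ->
  dXI P (FP P c) = plam P * XI P c + N2 P c + b1 P * N1 P c.
Proof.
  intros HY HK Hl. destruct c as [[x1 x2] x3].
  assert (E : dXI P (FP P ((x1, x2), x3)) - (plam P * XI P ((x1, x2), x3) + N2 P ((x1, x2), x3) + b1 P * N1 P ((x1, x2), x3))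
     = (pKI P - plam P * b0 P) * rr P ((x1, x2), x3)).
  { unfold dXI, dR0, dR1, dR2, FP, boost_PI, XI, R0, R1, R2, N1, N2, vv, pp, qq, rr, b1, b0, a1, a2, Uc, X1, Xc, st1, st2, st3; simpl.
    field; auto. }
  rewrite Hl in E. lra.
Qed.

Lemma id_et P c : pY P <> 0 -> pKI P <> 0 ->
  dET P (FP P c) = ZE P c + N1 P c.
Proof.
  intros HY HK. destruct c as [[x1 x2] x3].
  unfold dET, dR0, dR1, dR2, FP, boost_PI, ZE, R0, R1, R2, N1, vv, pp, qq, rr, a2, Uc, X1, Xc, st1, st2, st3; simpl.
  field; auto.
Qed.

Lemma id_ze P c : pY P <> 0 -> pKI P <> 0 -> plam P * b0 P = pKI P ->
  dZE P (FP P c) = - b0 P * ET P c - b1 P * ZE P c + N2 P c - plam P * N1 P c.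
Proof.
  intros HY HK Hl. destruct c as [[x1 x2] x3].
  assert (E : dZE P (FP P ((x1, x2), x3)) - (- b0 P * ET P ((x1, x2), x3) - b1 P * ZE P ((x1, x2), x3) + N2 P ((x1, x2), x3) - plam P * N1 P ((x1, x2), x3))
     = (pKI P - plam P * b0 P) * rr P ((x1, x2), x3)).
  { unfold dZE, dR0, dR1, dR2, FP, boost_PI, ET, ZE, R0, R1, R2, N1, N2, vv, pp, qq, rr, b1, b0, a1, a2, Uc, X1, Xc, st1, st2, st3; simpl.
    field; auto. }
  rewrite Hl in E. lra.
Qed.

Lemma der_plus (f g : R -> R) t df dg : is_derive f t df -> is_derive g t dg ->
  is_derive (fun s => f s + g s) t (df + dg).
Proof. intros. apply (is_derive_plus f g); auto. Qed.
Lemma der_scal (f : R -> R) a t df : is_derive f t df -> is_derive (fun s => a * f s) t (a * df).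
Proof. intros. apply (is_derive_scal f); auto. Qed.
Lemma der_const (a t : R) : is_derive (fun _ => a) t 0.
Proof. apply (@is_derive_const R_AbsRing R_NormedModule). Qed.
Lemma der_mult (f g : R -> R) t df dg : is_derive f t df -> is_derive g t dg ->
  is_derive (fun s => f s * g s) t (df * g t + f t * dg).
Proof. intros. apply (is_derive_mult f g); auto. intros; apply Rmult_comm. Qed.

Lemma der_aff3 (f1 f2 f3 : R -> R) t d1 d2 d3 al1 al2 al3 al0 :
  is_derive f1 t d1 -> is_derive f2 t d2 -> is_derive f3 t d3 ->
  is_derive (fun s => al1 * f1 s + al2 * f2 s + al3 * f3 s + al0) t (al1 * d1 + al2 * d2 + al3 * d3).
Proof.
  intros H1 H2 H3. replace (al1 * d1 + al2 * d2 + al3 * d3) with (al1 * d1 + al2 * d2 + al3 * d3 + 0) by ring.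
  apply der_plus. apply der_plus. apply der_plus. apply der_scal; auto. apply der_scal; auto.
  apply der_scal; auto. apply der_const.
Qed.

Lemma der_coords P (y : R -> R * R * R) t w :
  is_derive (fun s => st1 (y s)) t (st1 w) -> is_derive (fun s => st2 (y s)) t (st2 w) ->
  is_derive (fun s => st3 (y s)) t (st3 w) ->
  is_derive (fun s => XI P (y s)) t (dXI P w) /\ is_derive (fun s => ET P (y s)) t (dET P w) /\
  is_derive (fun s => ZE P (y s)) t (dZE P w).
Proof.
  intros H1 H2 H3. split; [|split].
  - replace (dXI P w) with (- Uc P * st1 w + (a2 P - b1 P) * st2 w + (b0 P - X1 P * pKI P) * st3 w).
    2:{ unfold dXI, dR0, dR1, dR2. ring. }
    eapply is_derive_ext. 2:{ apply (der_aff3 _ _ _ t _ _ _ (- Uc P) (a2 P - b1 P) (b0 P - X1 P * pKI P)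
      (Uc P * X1 P - (a2 P - b1 P) * pY P - (b0 P - X1 P * pKI P) * Xc P) H1 H2 H3). }
    intros s. simpl. unfold XI, R0, R1, R2, pp, qq, rr. ring.
  - replace (dET P w) with (0 * st1 w + (-1) * st2 w + (- plam P) * st3 w).
    2:{ unfold dET, dR0, dR1. ring. }
    eapply is_derive_ext. 2:{ apply (der_aff3 _ _ _ t _ _ _ 0 (-1) (- plam P)
      (pY P + plam P * Xc P) H1 H2 H3). }
    intros s. simpl. unfold ET, R0, R1, pp, qq, rr. ring.
  - replace (dZE P w) with (- Uc P * st1 w + (a2 P + plam P) * st2 w + (- (X1 P * pKI P)) * st3 w).
    2:{ unfold dZE, dR0, dR1, dR2. ring. }
    eapply is_derive_ext. 2:{ apply (der_aff3 _ _ _ t _ _ _ (- Uc P) (a2 P + plam P) (- (X1 P * pKI P))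
      (Uc P * X1 P - (a2 P + plam P) * pY P + X1 P * pKI P * Xc P) H1 H2 H3). }
    intros s. simpl. unfold ZE, R0, R1, R2, pp, qq, rr. ring.
Qed.

Lemma der_V P beta (y : R -> R * R * R) t w :
  is_derive (fun s => st1 (y s)) t (st1 w) -> is_derive (fun s => st2 (y s)) t (st2 w) ->
  is_derive (fun s => st3 (y s)) t (st3 w) ->
  is_derive (fun s => VV P beta (y s)) t (Vd P beta (y t) w).
Proof.
  intros H1 H2 H3. destruct (der_coords P y t w H1 H2 H3) as [Hx [He Hz]].
  unfold VV, Vd.
  replace (dXI P w - beta * (2 * ZE P (y t) * dZE P w + b0 P * (2 * ET P (y t) * dET P w))) with
    (dXI P w + (- beta) * ((dZE P w * ZE P (y t) + ZE P (y t) * dZE P w) +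
       b0 P * (dET P w * ET P (y t) + ET P (y t) * dET P w))) by ring.
  eapply is_derive_ext. 2:{ apply der_plus. apply Hx. apply der_scal. apply der_plus.
    apply (der_mult _ _ _ _ _ Hz Hz). apply der_scal. apply (der_mult _ _ _ _ _ He He). }
  intros s. simpl. ring.
Qed.

Lemma chet_local P beta K nu :
  0 < pY P -> 0 < pKI P -> 0 <= pKP P -> 0 < pd2 P -> 0 < plam P -> plam P * b0 P = pKI P ->
  0 < b0 P -> 0 <= b1 P -> 0 <= a2 P -> 0 <= K -> 0 < beta -> 0 < nu ->
  (forall xi et ze r0 r1 r2,
   (plam P * (b1 P + plam P) + b0 P) * r0 = xi - ze - (b1 P + plam P) * et ->
   r1 = et + plam P * r0 -> r2 = ze + plam P * r1 ->
   Rabs (- (pY P * (- r2 - a2 P * r1 - X1 P * pKI P * r0)) * (pKI P * r0 + pKP P * r1)) <= K * (Rabs xi + Rabs et + Rabs ze) ^ 2 /\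
   Rabs (Uc P * (- r1) * (pKI P * r0 + pKP P * r1) + a2 P * (pY P * (- r2 - a2 P * r1 - X1 P * pKI P * r0)) * (pKI P * r0 + pKP P * r1))
     <= K * (Rabs xi + Rabs et + Rabs ze) ^ 2) ->
  3 * (K * (1 + b1 P + 2 * (1 + plam P + b0 P))) <= plam P * Rmin 1 (b0 P) * beta / 4 ->
  3 * (K * (1 + b1 P + 2 * (1 + plam P + b0 P))) * nu <= plam P / 4 ->
  beta * nu <= 1 ->
  forall c, Rabs (XI P c) + Rabs (ET P c) + Rabs (ZE P c) <= nu -> 0 < VV P beta c ->
  plam P * XI P c / 2 <= Vd P beta c (FP P c).
Proof.
  intros HY HKI HKP Hd Hl Hlb Hb0 Hb1 Ha2 HK Hbe Hnu HKb HA1 HA2 Hbn c HN HV.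
  assert (HY0 : pY P <> 0) by lra. assert (HKI0 : pKI P <> 0) by lra.
  unfold Vd. rewrite (id_xi P c HY0 HKI0 Hlb), (id_et P c HY0 HKI0), (id_ze P c HY0 HKI0 Hlb).
  destruct (HKb (XI P c) (ET P c) (ZE P c) (R0 P c) (R1 P c) (R2 P c)) as [B1 B2].
  { unfold XI, ET, ZE. ring. }
  { unfold ET. ring. }
  { unfold ZE. ring. }
  assert (Ep : pp P c = pY P * (- R2 P c - a2 P * R1 P c - X1 P * pKI P * R0 P c)).
  { unfold R2, R1, R0, Uc. field. auto. }
  assert (Ev : vv P c = pKI P * R0 P c + pKP P * R1 P c).
  { unfold vv, R0, R1. ring. }
  assert (EN1 : N1 P c = - (pY P * (- R2 P c - a2 P * R1 P c - X1 P * pKI P * R0 P c)) * (pKI P * R0 P c + pKP P * R1 P c)).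
  { unfold N1. rewrite <- Ep, <- Ev. ring. }
  assert (EN2 : N2 P c = Uc P * (- R1 P c) * (pKI P * R0 P c + pKP P * R1 P c) + a2 P * (pY P * (- R2 P c - a2 P * R1 P c - X1 P * pKI P * R0 P c)) * (pKI P * R0 P c + pKP P * R1 P c)).
  { unfold N2. rewrite <- Ep, <- Ev. unfold R1. ring. }
  rewrite <- EN1 in B1. rewrite <- EN2 in B2.
  assert (Hreg : beta * (ZE P c ^ 2 + b0 P * ET P c ^ 2) < XI P c) by (unfold VV in HV; lra).
  assert (H := chet_ineq (plam P) (b0 P) (b1 P) K beta nu (XI P c) (ET P c) (ZE P c) (N1 P c) (N2 P c)
     Hl Hb0 Hb1 HK Hbe Hnu HA1 HA2 Hbn B1 B2 HN Hreg).
  eapply Rle_trans. apply H. right. ring.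
Qed.

Definition Cb P := 2 * (Uc P + a2 P + X1 P * pKI P) + b1 P + b0 P + 1 + 2 * plam P.

Lemma box_N P c a : 0 <= Uc P -> 0 <= a2 P -> 0 <= X1 P * pKI P -> 0 <= b1 P -> 0 <= b0 P -> 0 <= plam P ->
  Rabs (pp P c) <= a -> Rabs (qq P c) <= a -> Rabs (rr P c) <= a ->
  Rabs (XI P c) + Rabs (ET P c) + Rabs (ZE P c) <= Cb P * a.
Proof.
  intros H1 H2 H3 H4 H5 H6 Hp Hq Hr.
  assert (Ha : 0 <= a) by (eapply Rle_trans; [apply Rabs_pos | eauto]).
  assert (B0 : Rabs (R0 P c) <= a) by (unfold R0; auto).
  assert (B1 : Rabs (R1 P c) <= a) by (unfold R1; rewrite Rabs_Ropp; auto).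
  assert (B2 : Rabs (R2 P c) <= (Uc P + a2 P + X1 P * pKI P) * a).
  { unfold R2. apply Rle_trans with (Uc P * a + a2 P * a + X1 P * pKI P * a).
    apply abs_sub_le. apply abs_add_le.
    rewrite Ropp_mult_distr_l_reverse, Rabs_Ropp, Rabs_mult, (Rabs_right (Uc P)) by lra. apply Rmult_le_compat_l; lra.
    rewrite Rabs_mult, (Rabs_right (a2 P)) by lra. apply Rmult_le_compat_l; lra.
    rewrite Rabs_mult, (Rabs_right (X1 P * pKI P)) by lra. apply Rmult_le_compat_l; lra.
    lra. }
  set (c2 := Uc P + a2 P + X1 P * pKI P) in *.
  assert (HX : Rabs (XI P c) <= (c2 + b1 P + b0 P) * a).
  { unfold XI. apply Rle_trans with (c2 * a + b1 P * a + b0 P * a).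
    apply abs_add_le. apply abs_add_le. auto.
    rewrite Rabs_mult, (Rabs_right (b1 P)) by lra. apply Rmult_le_compat_l; lra.
    rewrite Rabs_mult, (Rabs_right (b0 P)) by lra. apply Rmult_le_compat_l; lra. lra. }
  assert (HE : Rabs (ET P c) <= (1 + plam P) * a).
  { unfold ET. apply Rle_trans with (a + plam P * a).
    apply abs_sub_le. auto. rewrite Rabs_mult, (Rabs_right (plam P)) by lra. apply Rmult_le_compat_l; lra. lra. }
  assert (HZ : Rabs (ZE P c) <= (c2 + plam P) * a).
  { unfold ZE. apply Rle_trans with (c2 * a + plam P * a).
    apply abs_sub_le. auto. rewrite Rabs_mult, (Rabs_right (plam P)) by lra. apply Rmult_le_compat_l; lra. lra. }
  unfold Cb. fold c2.
  replace ((2 * c2 + b1 P + b0 P + 1 + 2 * plam P) * a) with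
    ((c2 + b1 P + b0 P) * a + (1 + plam P) * a + (c2 + plam P) * a) by ring. lra.
Qed.

Lemma clamp_id a e c : Rabs (st1 c - st1 e) <= a -> Rabs (st2 c - st2 e) <= a -> Rabs (st3 c - st3 e) <= a ->
  clampc a e c = c.
Proof.
  intros H1 H2 H3. destruct c as [[x1 x2] x3]. unfold clampc.
  rewrite !cl_id; auto.
Qed.

Lemma Rmax_lip a b c d : Rabs (Rmax a b - Rmax c d) <= Rmax (Rabs (a - c)) (Rabs (b - d)).
Proof.
  assert (H1 : Rabs (a - c) <= Rmax (Rabs (a - c)) (Rabs (b - d))) by apply Rmax_l.
  assert (H2 : Rabs (b - d) <= Rmax (Rabs (a - c)) (Rabs (b - d))) by apply Rmax_r.
  apply Rabs_le_between in H1 || idtac.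
  revert H1 H2. generalize (Rmax (Rabs (a - c)) (Rabs (b - d))). intros m H1 H2.
  unfold Rmax. repeat destruct Rle_dec; unfold Rabs in *; repeat destruct Rcase_abs; lra.
Qed.

Lemma abs_lip a b : Rabs (Rabs a - Rabs b) <= Rabs (a - b).
Proof. apply Rabs_triang_inv2. Qed.

Lemma sqrt3_ge x y z : Rmax (Rabs x) (Rmax (Rabs y) (Rabs z)) <= sqrt (x ^ 2 + y ^ 2 + z ^ 2).
Proof.
  assert (Hx := pow2_ge_0 x). assert (Hy := pow2_ge_0 y). assert (Hz := pow2_ge_0 z).
  assert (G : forall u, u ^ 2 <= x ^ 2 + y ^ 2 + z ^ 2 -> Rabs u <= sqrt (x ^ 2 + y ^ 2 + z ^ 2)).
  { intros u Hu. rewrite <- (sqrt_pow2 (Rabs u)) by apply Rabs_pos. apply sqrt_le_1_alt. rewrite pow2_abs. auto. }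
  apply Rmax_lub. apply G; lra. apply Rmax_lub; apply G; lra.
Qed.

Lemma sqrt3_le x y z : sqrt (x ^ 2 + y ^ 2 + z ^ 2) <= Rabs x + Rabs y + Rabs z.
Proof.
  assert (H0 : 0 <= Rabs x + Rabs y + Rabs z) by (assert (H1:=Rabs_pos x); assert (H2:=Rabs_pos y); assert (H3:=Rabs_pos z); lra).
  rewrite <- (sqrt_pow2 (Rabs x + Rabs y + Rabs z)) by auto. apply sqrt_le_1_alt.
  rewrite <- (pow2_abs x), <- (pow2_abs y), <- (pow2_abs z).
  assert (H1:=Rabs_pos x); assert (H2:=Rabs_pos y); assert (H3:=Rabs_pos z). nra.
Qed.

Lemma mvt (f df : R -> R) a b : a < b -> (forall t, is_derive f t (df t)) ->
  exists c, a < c < b /\ f b - f a = df c * (b - a).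
Proof.
  intros Hab Hd. destruct (MVT_cor2 f df a b Hab) as [c [Hc1 Hc2]].
  intros c _. apply is_derive_Reals. apply Hd.
  exists c. split; auto.
Qed.

Theorem unstable d2 Y KP KI u0 : 0 < d2 -> 0 < Y -> 0 <= KP -> 0 < KI ->
  ~ lyapunov_stable (boost_PI d2 Y KP KI u0) ((d2 * Y ^ 2, Y), (/ Y - u0) / KI).
Proof.
  intros Hd HY HKP HKI Hst.
  destruct (cubic_root (d2 + d2 * Y ^ 2 * KP) (d2 * Y ^ 2 * KI + (/ Y) ^ 2 - KP) KI HKI) as [lam [Hl Hcub]].
  set (P := mkprm d2 Y KP KI u0 lam).
  assert (Ed2 : pd2 P = d2) by reflexivity. assert (EY : pY P = Y) by reflexivity.
  assert (EKP : pKP P = KP) by reflexivity. assert (EKI : pKI P = KI) by reflexivity.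
  assert (Elam : plam P = lam) by reflexivity.
  assert (Hlb : plam P * b0 P = pKI P).
  { unfold b0, a2, a1, X1; simpl. lra. }
  assert (Hb0 : 0 < b0 P).
  { assert (0 < plam P * b0 P) by (rewrite Hlb; simpl; lra).
    destruct (Rle_dec (b0 P) 0); auto. simpl plam in H. nra. lra. }
  assert (HX1 : 0 < X1 P) by (unfold X1; rewrite Ed2, EY; apply Rmult_lt_0_compat; [lra | apply pow_lt; lra]).
  assert (Ha2 : 0 <= a2 P) by (unfold a2; simpl; assert (0 <= X1 P * KP) by (apply Rmult_le_pos; lra); lra).
  assert (Hb1 : 0 <= b1 P) by (unfold b1; simpl; lra).
  assert (HU : 0 < Uc P) by (unfold Uc; simpl; apply Rinv_0_lt_compat; lra).
  assert (HXK : 0 <= X1 P * pKI P) by (simpl; apply Rmult_le_pos; lra).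
  destruct (coord_bounds lam (b0 P) (b1 P) Y (a2 P) (X1 P * KI) KI KP (Uc P)) as [K [HK HKb]];
    try lra; auto.
  set (A := K * (1 + b1 P + 2 * (1 + plam P + b0 P))).
  assert (HA : 0 <= A) by (unfold A; simpl; apply Rmult_le_pos; lra).
  set (m := Rmin 1 (b0 P)).
  assert (Hm : 0 < m) by (unfold m, Rmin; destruct Rle_dec; lra).
  set (beta := 12 * A / (plam P * m) + 1).
  assert (Hbeta : 0 < beta).
  { unfold beta. assert (0 <= 12 * A / (plam P * m)). apply Rmult_le_pos. lra.
    left; apply Rinv_0_lt_compat; simpl; nra. lra. }
  set (nu := Rmin (plam P / (12 * A + 1)) (1 / beta)).
  assert (Hnu : 0 < nu).
  { unfold nu, Rmin; destruct Rle_dec; apply Rdiv_lt_0_compat; simpl; lra. }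
  assert (HA1 : 3 * A <= plam P * m * beta / 4).
  { assert (plam P * m * beta = 12 * A + plam P * m).
    { unfold beta. field. simpl. split; lra. }
    rewrite H. assert (0 < plam P * m) by (simpl; nra). lra. }
  assert (HA2 : 3 * A * nu <= plam P / 4).
  { assert (nu <= plam P / (12 * A + 1)) by apply Rmin_l.
    apply Rle_trans with (3 * A * (plam P / (12 * A + 1))). apply Rmult_le_compat_l; lra.
    apply Rmult_le_reg_r with (12 * A + 1). lra.
    replace (3 * A * (plam P / (12 * A + 1)) * (12 * A + 1)) with (3 * A * plam P) by (field; lra).
    simpl. nra. }
  assert (Hbn : beta * nu <= 1).
  { assert (nu <= 1 / beta) by apply Rmin_r.
    apply Rle_trans with (beta * (1 / beta)). apply Rmult_le_compat_l; lra.
    right; field; lra. }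
  assert (HCb : 0 <= Cb P) by (unfold Cb; simpl in *; lra).
  set (a := nu / (Cb P + 1)).
  assert (Ha : 0 < a) by (unfold a; apply Rdiv_lt_0_compat; lra).
  assert (HaN : Cb P * a <= nu).
  { unfold a. apply Rmult_le_reg_r with (Cb P + 1). lra.
    replace (Cb P * (nu / (Cb P + 1)) * (Cb P + 1)) with (Cb P * nu) by (field; lra). nra. }
  set (e := eq_pt P).
  assert (Hchet : forall c, Rabs (pp P c) <= a -> Rabs (qq P c) <= a -> Rabs (rr P c) <= a ->
     0 < VV P beta c -> plam P * XI P c / 2 <= Vd P beta c (FP P c)).
  { intros c Hp Hq Hr HV. apply (chet_local P beta K nu); simpl; try lra; auto.
    - apply Rle_trans with (Cb P * a); auto. apply box_N; auto; simpl; lra. }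
  assert (HN : forall c, Rabs (pp P c) <= a -> Rabs (qq P c) <= a -> Rabs (rr P c) <= a ->
     Rabs (XI P c) + Rabs (ET P c) + Rabs (ZE P c) <= nu).
  { intros c Hp Hq Hr. apply Rle_trans with (Cb P * a); auto. apply box_N; auto; simpl; lra. }
  assert (HXIV : forall c, VV P beta c <= XI P c).
  { intros c. unfold VV. assert (0 <= ZE P c ^ 2) by apply pow2_ge_0.
    assert (0 <= ET P c ^ 2) by apply pow2_ge_0. assert (0 <= b0 P * ET P c ^ 2) by nra. nra. }
  destruct (Gb_nice d2 Y KP KI u0 a e) as [M [L HG]]; try lra.
  destruct (Hst a Ha) as [delta [Hdel Hstab]].
  set (D := plam P * (b1 P + plam P) + b0 P).
  assert (HD : 0 < D) by (unfold D; simpl in *; nra).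
  set (w1 := - Y * (plam P ^ 2 + a2 P * plam P + X1 P * KI) / D).
  set (w2 := - plam P / D). set (w3 := 1 / D).
  set (S1 := Rabs w1 + Rabs w2 + Rabs w3).
  assert (HS1 : 0 <= S1) by (unfold S1; assert (H1 := Rabs_pos w1); assert (H2 := Rabs_pos w2); assert (H3 := Rabs_pos w3); lra).
  set (sigma := Rmin delta a / (2 * (S1 + 1))).
  assert (Hmin : 0 < Rmin delta a) by (unfold Rmin; destruct Rle_dec; lra).
  assert (Hsig : 0 < sigma) by (unfold sigma; apply Rdiv_lt_0_compat; lra).
  assert (HsigS : sigma * S1 < Rmin delta a / 2).
  { unfold sigma. apply Rle_lt_trans with (Rmin delta a / (2 * (S1 + 1)) * (S1 + 1) - Rmin delta a / (2 * (S1 + 1))).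
    assert (0 < Rmin delta a / (2 * (S1 + 1))) by (apply Rdiv_lt_0_compat; lra). nra.
    replace (Rmin delta a / (2 * (S1 + 1)) * (S1 + 1)) with (Rmin delta a / 2) by (field; lra).
    assert (0 < Rmin delta a / (2 * (S1 + 1))) by (apply Rdiv_lt_0_compat; lra). lra. }
  assert (Hmd : Rmin delta a <= delta) by apply Rmin_l.
  assert (Hma : Rmin delta a <= a) by apply Rmin_r.
  set (x0 := ((X1 P + sigma * w1, Y + sigma * w2), Xc P + sigma * w3)).
  assert (Hp0 : pp P x0 = sigma * w1) by (unfold pp, x0, st1; simpl; ring).
  assert (Hq0 : qq P x0 = sigma * w2) by (unfold qq, x0, st2; simpl; ring).
  assert (Hr0 : rr P x0 = sigma * w3) by (unfold rr, x0, st3; simpl; ring).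
  assert (HY0 : Y <> 0) by lra.
  assert (HXI0 : XI P x0 = sigma).
  { unfold XI, R0, R1, R2. rewrite Hp0, Hq0, Hr0. unfold w1, w2, w3, Uc. rewrite ?EY, ?EKI.
    assert (HD0 : D <> 0) by lra.
    field_simplify_eq; [ | split; auto ]. unfold D. rewrite ?EKI. ring. }
  assert (HET0 : ET P x0 = 0).
  { unfold ET, R0, R1. rewrite Hq0, Hr0. unfold w2, w3. field. lra. }
  assert (HZE0 : ZE P x0 = 0).
  { unfold ZE, R0, R1, R2. rewrite Hp0, Hq0, Hr0. unfold w1, w2, w3, Uc. rewrite ?EY, ?EKI.
    assert (HD0 : D <> 0) by lra.
    field_simplify_eq; [ | split; auto ]. ring. }
  assert (HV0 : VV P beta x0 = sigma).
  { unfold VV. rewrite HXI0, HET0, HZE0. ring. }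
  assert (Hsw : forall wi, Rabs wi <= S1 -> Rabs (sigma * wi) < a / 2).
  { intros wi Hwi. rewrite Rabs_mult, (Rabs_right sigma) by lra.
    apply Rle_lt_trans with (sigma * S1). apply Rmult_le_compat_l; lra. lra. }
  assert (Hw1 : Rabs w1 <= S1) by (unfold S1; assert (H2 := Rabs_pos w2); assert (H3 := Rabs_pos w3); lra).
  assert (Hw2 : Rabs w2 <= S1) by (unfold S1; assert (H2 := Rabs_pos w1); assert (H3 := Rabs_pos w3); lra).
  assert (Hw3 : Rabs w3 <= S1) by (unfold S1; assert (H2 := Rabs_pos w2); assert (H3 := Rabs_pos w1); lra).
  assert (Hdist0 : dist3 x0 e < delta).
  { unfold dist3. change (st1 x0 - st1 e) with (pp P x0). change (st2 x0 - st2 e) with (qq P x0).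
    change (st3 x0 - st3 e) with (rr P x0). rewrite Hp0, Hq0, Hr0.
    eapply Rle_lt_trans. apply sqrt3_le. rewrite !Rabs_mult, (Rabs_right sigma) by lra.
    unfold S1 in HsigS. lra. }
  destruct (ode_exists _ _ _ HG x0) as [y [Hy0 [Hyd Hylip]]].
  assert (HM : 0 <= M) by (destruct HG; lra).
  assert (HGF : forall c, Rabs (pp P c) <= a -> Rabs (qq P c) <= a -> Rabs (rr P c) <= a ->
     Gb d2 Y KP KI u0 a e c = FP P c).
  { intros c Hp Hq Hr. unfold Gb, FP. rewrite clamp_id; auto. }
  set (g := fun t => Rmax (Rabs (pp P (y t))) (Rmax (Rabs (qq P (y t))) (Rabs (rr P (y t)))) - a).
  assert (Hgc : forall t, continuous g t).
  { apply lip_cont with M. auto. intros s t. unfold g.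
    replace (Rmax (Rabs (pp P (y s))) (Rmax (Rabs (qq P (y s))) (Rabs (rr P (y s)))) - a -
      (Rmax (Rabs (pp P (y t))) (Rmax (Rabs (qq P (y t))) (Rabs (rr P (y t)))) - a)) with
      (Rmax (Rabs (pp P (y s))) (Rmax (Rabs (qq P (y s))) (Rabs (rr P (y s)))) -
      Rmax (Rabs (pp P (y t))) (Rmax (Rabs (qq P (y t))) (Rabs (rr P (y t)))))  by ring.
    eapply Rle_trans. apply Rmax_lip. apply Rmax_lub.
    eapply Rle_trans. apply abs_lip. unfold pp.
    replace (st1 (y s) - X1 P - (st1 (y t) - X1 P)) with (st1 (y s) - st1 (y t)) by ring.
    apply Hylip. apply st_pr.
    eapply Rle_trans. apply Rmax_lip. apply Rmax_lub.
    eapply Rle_trans. apply abs_lip. unfold qq.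
    replace (st2 (y s) - pY P - (st2 (y t) - pY P)) with (st2 (y s) - st2 (y t)) by ring.
    apply Hylip. apply st_pr.
    eapply Rle_trans. apply abs_lip. unfold rr.
    replace (st3 (y s) - Xc P - (st3 (y t) - Xc P)) with (st3 (y s) - st3 (y t)) by ring.
    apply Hylip. apply st_pr. }
  assert (Hbox : forall t, g t <= 0 -> Rabs (pp P (y t)) <= a /\ Rabs (qq P (y t)) <= a /\ Rabs (rr P (y t)) <= a).
  { intros t Ht. unfold g in Ht.
    assert (H1 := Rmax_l (Rabs (pp P (y t))) (Rmax (Rabs (qq P (y t))) (Rabs (rr P (y t))))).
    assert (H2 := Rmax_r (Rabs (pp P (y t))) (Rmax (Rabs (qq P (y t))) (Rabs (rr P (y t))))).
    assert (H3 := Rmax_l (Rabs (qq P (y t))) (Rabs (rr P (y t)))).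
    assert (H4 := Rmax_r (Rabs (qq P (y t))) (Rabs (rr P (y t)))). lra. }
  assert (Hg0 : g 0 < 0).
  { unfold g. rewrite Hy0, Hp0, Hq0, Hr0.
    assert (Rabs (sigma * w1) < a / 2) by auto. assert (Rabs (sigma * w2) < a / 2) by auto.
    assert (Rabs (sigma * w3) < a / 2) by auto.
    unfold Rmax; repeat destruct Rle_dec; lra. }
  assert (Hderiv : forall t, Rabs (pp P (y t)) <= a -> Rabs (qq P (y t)) <= a -> Rabs (rr P (y t)) <= a ->
     is_derive (fun s => st1 (y s)) t (st1 (FP P (y t))) /\
     is_derive (fun s => st2 (y s)) t (st2 (FP P (y t))) /\
     is_derive (fun s => st3 (y s)) t (st3 (FP P (y t)))).
  { intros t Hp Hq Hr. rewrite <- (HGF (y t)) by auto.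
    split. apply Hyd; apply st_pr. split; apply Hyd; apply st_pr. }
  set (T0 := 4 * nu / (plam P * sigma) + 1).
  assert (HT0 : 0 < T0) by (unfold T0; assert (0 < 4 * nu / (plam P * sigma)) by (apply Rdiv_lt_0_compat; simpl; nra); lra).
  assert (Hesc : exists t, 0 <= t <= T0 /\ 0 <= g t).
  { destruct (classic (exists t, 0 <= t <= T0 /\ 0 <= g t)) as [|Hno]; auto. exfalso.
    assert (Hin : forall t, 0 <= t <= T0 -> g t < 0).
    { intros t Ht. destruct (Rlt_dec (g t) 0); auto. exfalso. apply Hno. exists t. split; auto; lra. }
    set (f := fun s => VV P beta (y s)).
    set (df := fun s => Vd P beta (y s) (Gb d2 Y KP KI u0 a e (y s))).
    assert (Hfd : forall t, is_derive f t (df t)).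
    { intros t. apply der_V; apply Hyd; apply st_pr. }
    assert (Hfc : forall t, continuous f t).
    { intros t. apply (ex_derive_continuous f). exists (df t). apply Hfd. }
    assert (Hgood : forall t, 0 <= t <= T0 -> 0 < f t -> plam P * f t / 2 <= df t).
    { intros t Ht Hft. assert (Hgt := Hin t Ht). destruct (Hbox t (Rlt_le _ _ Hgt)) as [Hp [Hq Hr]].
      unfold df. rewrite HGF by auto. eapply Rle_trans. 2:{ apply Hchet; auto. }
      assert (f t <= XI P (y t)) by apply HXIV. simpl in *. nra. }
    assert (Hf0 : f 0 = sigma) by (unfold f; rewrite Hy0; auto).
    assert (Hpos : forall t, 0 <= t <= T0 -> sigma / 2 < f t).
    { destruct (classic (exists t, 0 <= t <= T0 /\ 0 <= sigma / 2 - f t)) as [Hex|Hno2].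
      - exfalso.
        destruct (first_exit (fun t => sigma / 2 - f t) T0) as [t1 [Ht1 [Hft1 Hbel]]]; auto.
        intros t. apply (continuous_minus (fun _ => sigma / 2) f). apply continuous_const. auto.
        simpl. lra. lra.
        destruct (mvt f df 0 t1) as [c [Hc Hmv]]. lra. auto.
        assert (Hfc1 : sigma / 2 < f c) by (specialize (Hbel c ltac:(lra)); lra).
        assert (Hdc : plam P * f c / 2 <= df c) by (apply Hgood; lra).
        assert (0 < df c) by (simpl in *; nra).
        assert (0 < df c * (t1 - 0)) by nra. lra.
      - intros t Ht. destruct (Rlt_dec (sigma / 2) (f t)); auto. exfalso. apply Hno2.
        exists t. split; auto. lra. }
    destruct (mvt f df 0 T0) as [c [Hc Hmv]]. lra. auto.
    assert (Hfc1 := Hpos c ltac:(lra)).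
    assert (Hdc : plam P * f c / 2 <= df c) by (apply Hgood; lra).
    assert (HfT : f T0 <= nu).
    { assert (Hg := Hin T0 ltac:(lra)). destruct (Hbox T0 (Rlt_le _ _ Hg)) as [Hp [Hq Hr]].
      assert (H1 := HN _ Hp Hq Hr). assert (f T0 <= XI P (y T0)) by apply HXIV.
      assert (XI P (y T0) <= Rabs (XI P (y T0))) by apply Rle_abs.
      assert (H2 := Rabs_pos (ET P (y T0))). assert (H3 := Rabs_pos (ZE P (y T0))). lra. }
    assert (Hlow : plam P * sigma / 4 <= df c) by (simpl in *; nra).
    assert (f T0 - f 0 >= plam P * sigma / 4 * T0) by (rewrite Hmv; nra).
    assert (plam P * sigma / 4 * T0 = nu + plam P * sigma / 4).
    { unfold T0. field. simpl. split; lra. }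
    simpl in *. nra. }
  destruct (first_exit g T0 Hgc Hg0 (Rlt_le _ _ HT0) Hesc) as [t1 [Ht1 [Hgt1 Hbel]]].
  assert (Hsol : is_solution (boost_PI d2 Y KP KI u0) t1 y).
  { intros t Ht. assert (Hgt : g t <= 0).
    { destruct (Req_dec t t1) as [->|Hne]. lra. apply Rlt_le, Hbel. lra. }
    destruct (Hbox t Hgt) as [Hp [Hq Hr]]. apply Hderiv; auto. }
  assert (Hlt := Hstab t1 y ltac:(lra) Hsol ltac:(rewrite Hy0; exact Hdist0) t1 ltac:(lra)).
  assert (Hge : a <= dist3 (y t1) e).
  { unfold dist3. change (st1 (y t1) - st1 e) with (pp P (y t1)).
    change (st2 (y t1) - st2 e) with (qq P (y t1)). change (st3 (y t1) - st3 e) with (rr P (y t1)).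
    eapply Rle_trans. 2: apply sqrt3_ge. unfold g in Hgt1. lra. }
  assert (Ee : e = ((d2 * Y ^ 2, Y), (/ Y - u0) / KI)) by reflexivity.
  rewrite Ee in Hge. lra.
Qed.

Lemma equil_char d2 Y KP KI u0 c : 0 < d2 -> 0 < Y -> 0 <= KP -> 0 < KI ->
  is_equilibrium (boost_PI d2 Y KP KI u0) c <-> c = ((d2 * Y ^ 2, Y), (/ Y - u0) / KI).
Proof.
  intros Hd HY HKP HKI. destruct c as [[x1 x2] x3].
  unfold is_equilibrium, boost_PI, st1, st2, st3; simpl. split.
  - intros Hc. injection Hc as H1 H2 H3.
    assert (Ex2 : x2 = Y) by lra. subst x2.
    set (u := u0 + KI * x3 + KP * (Y - Y)) in *.
    assert (Eu : u = / Y). { apply Rmult_eq_reg_l with Y. rewrite Rinv_r; lra. lra. }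
    assert (Ex1 : x1 = d2 * Y ^ 2).
    { rewrite Eu in H2. apply Rmult_eq_reg_r with (/ Y). field_simplify_eq; try lra.
      field_simplify_eq in H2; lra. apply Rinv_neq_0_compat; lra. }
    assert (Ex3 : x3 = (/ Y - u0) / KI).
    { unfold u in Eu. apply Rmult_eq_reg_l with KI; [| lra].
      replace (KI * ((/ Y - u0) / KI)) with (/ Y - u0) by (field; lra). lra. }
    rewrite Ex1, Ex3. reflexivity.
  - intros Hc. injection Hc as -> -> ->. f_equal; [f_equal|]; field; lra.
Qed.

Theorem proposition1 (d2 ystar KP KI u0 : R) :
  0 < d2 -> 0 < ystar -> 0 <= KP -> 0 < KI ->
  (exists! e : R * R * R, is_equilibrium (boost_PI d2 ystar KP KI u0) e) /\
  (forall e : R * R * R, is_equilibrium (boost_PI d2 ystar KP KI u0) e ->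
     ~ lyapunov_stable (boost_PI d2 ystar KP KI u0) e).
Proof.
  intros Hd HY HKP HKI. split.
  - exists ((d2 * ystar ^ 2, ystar), (/ ystar - u0) / KI). split.
    + apply equil_char; auto.
    + intros c Hc. symmetry. apply (equil_char d2 ystar KP KI u0 c); auto.
  - intros e He. apply equil_char in He; auto. rewrite He. apply unstable; auto.
Qed.
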